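(* Let $F=L-N:X\to Y$ be continuous and satisfy hypothesis (H) and hypotheses (V+) and (V−). Then $F:X\to Y$ is proper (preimages of compact sets are compact) if and only if, for every $z\in H_Y$, the restriction of $F$ to the fiber $\{u(z,t):t\in\mathbb{R}\}$ is proper as a map to $z+V_Y$.
   Context: Let $X,Y$ be real Hilbert spaces, $X$ densely included in $Y$, and let $L:X\subset Y\to Y$ be a self-adjoint operator, $X$ carrying the graph norm. Let $\lambda_p$ be a simple isolated eigenvalue of $L$ with eigenvector $\phi_p\in X$, $\|\phi_p\|_Y=1$. Let $V_X=V_Y=\langle\phi_p\rangle$ be its real span, $H_Y=\{y\in Y:\langle y,\phi_p\rangle_Y=0\}$, $H_X=X\cap H_Y$, and $P:Y\to H_Y$ the orthogonal projection. Let $N:Y\to Y$, $F=L-N:X\to Y$, and for $t\in\mathbb{R}$ let $PN_t:H_Y\to H_Y$, $PN_t(w)=PN(w+t\phi_p)$, and $PF_t:H_X\to H_Y$, $PF_t(w)=PF(w+t\phi_p)$. Hypothesis (H): there is $n\ge0$ such that every $PN_t$ is Lipschitz with constant $n$ independent of $t$, and $[-n,n]\cap\sigma(L)=\{\lambda_p\}$. Under (H) each $PF_t$ is a homeomorphism; for $z\in H_Y$, $t\in\mathbb{R}$ let $w(z,t)=(PF_t)^{-1}(z)$ and $u(z,t)=w(z,t)+t\phi_p$, so $\{u(z,t):t\in\mathbb{R}\}=F^{-1}(z+V_Y)$ is the fiber associated to $z$. Hypotheses (V±): for each $z_0\in H_Y$ there are a ball $U(z_0)\subset H_Y$ centered at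 $z_0$ and constants $\epsilon>0$, $T>0$, $c_+,c_-\in\mathbb{R}$ such that for all $z\in U(z_0)$: (V+) $\langle N(u(z,t)),\phi_p\rangle_Y>(\lambda_p+\epsilon)t+c_+$ for $t>T$; (V−) $\langle N(u(z,t)),\phi_p\rangle_Y>(\lambda_p-\epsilon)t+c_-$ for $t<-T$. *)

(* Defs.v *)
From Stdlib Require Import Reals List.
Open Scope R_scope.

Record RHilbert := {
  car :> Type;
  vzero : car;
  vadd : car -> car -> car;
  vopp : car -> car;
  vscal : R -> car -> car;
  inner : car -> car -> R;
  vadd_assoc : forall x y z, vadd x (vadd y z) = vadd (vadd x y) z;
  vadd_comm : forall x y, vadd x y = vadd y x;
  vadd_0 : forall x, vadd x vzero = x;
  vadd_opp : forall x, vadd x (vopp x) = vzero;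
  vscal_1 : forall x, vscal 1 x = x;
  vscal_assoc : forall a b x, vscal a (vscal b x) = vscal (a * b) x;
  vscal_distr_v : forall a x y, vscal a (vadd x y) = vadd (vscal a x) (vscal a y);
  vscal_distr_s : forall a b x, vscal (a + b) x = vadd (vscal a x) (vscal b x);
  inner_sym : forall x y, inner x y = inner y x;
  inner_add_l : forall x y z, inner (vadd x y) z = inner x z + inner y z;
  inner_scal_l : forall a x y, inner (vscal a x) y = a * inner x y;
  inner_pos : forall x, 0 <= inner x x;
  inner_def : forall x, inner x x = 0 -> x = vzero;
  complete : forall s : nat -> car,
    (forall eps, 0 < eps -> exists N, forall m n, (N <= m)%nat -> (N <= n)%nat ->
        sqrt (inner (vadd (s m) (vopp (s n))) (vadd (s m) (vopp (s n)))) < eps) ->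
    exists l, forall eps, 0 < eps -> exists N, forall n, (N <= n)%nat ->
        sqrt (inner (vadd (s n) (vopp l)) (vadd (s n) (vopp l))) < eps
}.

Arguments vzero {r}.
Arguments vadd {r} _ _.
Arguments vopp {r} _.
Arguments vscal {r} _ _.
Arguments inner {r} _ _.

Section Defs.
Context {Y : RHilbert}.

Definition vsub (x y : Y) : Y := vadd x (vopp y).
Definition norm (x : Y) : R := sqrt (inner x x).
Definition distY (x y : Y) : R := norm (vsub x y).

Definition open_in (S : Y -> Prop) (d : Y -> Y -> R) (U : Y -> Prop) : Prop :=
  forall x, S x -> U x -> exists r, 0 < r /\ forall y, S y -> d x y < r -> U y.

Definition compact_in (S : Y -> Prop) (d : Y -> Y -> R) (K : Y -> Prop) : Prop :=
  (forall x, K x -> S x) /\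
  forall (I : Type) (U : I -> Y -> Prop),
    (forall i, open_in S d (U i)) ->
    (forall x, K x -> exists i, U i x) ->
    exists l : list I, forall x, K x -> exists i, In i l /\ U i x.

(** Operator [L] with domain [D] (the space X). *)
Definition subspace (D : Y -> Prop) : Prop :=
  D vzero /\ (forall x y, D x -> D y -> D (vadd x y)) /\
  (forall a x, D x -> D (vscal a x)).

Definition dense (D : Y -> Prop) : Prop :=
  forall y eps, 0 < eps -> exists x, D x /\ distY x y < eps.

Definition linear_on (D : Y -> Prop) (L : Y -> Y) : Prop :=
  (forall x y, D x -> D y -> L (vadd x y) = vadd (L x) (L y)) /\
  (forall a x, D x -> L (vscal a x) = vscal a (L x)).

(** Densely defined L with L = L-adjoint (symmetric, and dom(L-adjoint) contained in dom(L)). *)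
Definition self_adjoint (D : Y -> Prop) (L : Y -> Y) : Prop :=
  subspace D /\ dense D /\ linear_on D L /\
  (forall x y, D x -> D y -> inner (L x) y = inner x (L y)) /\
  (forall y w, (forall x, D x -> inner (L x) y = inner x w) -> D y /\ L y = w).

Definition in_resolvent (D : Y -> Prop) (L : Y -> Y) (mu : R) : Prop :=
  exists Rm : Y -> Y,
    (forall y, D (Rm y) /\ vsub (L (Rm y)) (vscal mu (Rm y)) = y) /\
    (forall x, D x -> Rm (vsub (L x) (vscal mu x)) = x) /\
    (exists C, forall y, norm (Rm y) <= C * norm y).

Definition spectrum (D : Y -> Prop) (L : Y -> Y) (mu : R) : Prop :=
  ~ in_resolvent D L mu.

Definition simple_isolated_eigenvalue (D : Y -> Prop) (L : Y -> Y)
    (lam : R) (phi : Y) : Prop :=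
  D phi /\ norm phi = 1 /\ L phi = vscal lam phi /\
  (forall v, D v -> L v = vscal lam v -> exists c, v = vscal c phi) /\
  (exists delta, 0 < delta /\
     forall mu, 0 < Rabs (mu - lam) < delta -> ~ spectrum D L mu).

Definition graph_dist (L : Y -> Y) (u v : Y) : R :=
  sqrt (norm (vsub u v) ^ 2 + norm (vsub (L u) (L v)) ^ 2).

Definition HY (phi : Y) (y : Y) : Prop := inner y phi = 0.
Definition HX (D : Y -> Prop) (phi : Y) (x : Y) : Prop := D x /\ HY phi x.
Definition Pr (phi : Y) (y : Y) : Y := vsub y (vscal (inner y phi) phi).

Definition Fmap (L N : Y -> Y) (u : Y) : Y := vsub (L u) (N u).

Definition F_continuous (D : Y -> Prop) (L N : Y -> Y) : Prop :=
  forall u, D u -> forall eps, 0 < eps -> exists delta, 0 < delta /\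
    forall v, D v -> graph_dist L u v < delta ->
      distY (Fmap L N v) (Fmap L N u) < eps.

Definition hyp_H (D : Y -> Prop) (L N : Y -> Y) (lam : R) (phi : Y) : Prop :=
  exists n, 0 <= n /\
    (forall t w1 w2, HY phi w1 -> HY phi w2 ->
       norm (vsub (Pr phi (N (vadd w1 (vscal t phi))))
                  (Pr phi (N (vadd w2 (vscal t phi)))))
       <= n * norm (vsub w1 w2)) /\
    (forall mu, -n <= mu <= n -> (spectrum D L mu <-> mu = lam)).

(** [is_u z t u]: u = u(z,t) = w(z,t) + t phi, where w(z,t) in H_X solves
    PF_t(w) = z (w(z,t) = (PF_t)^{-1}(z), unique under (H)). *)
Definition is_u (D : Y -> Prop) (L N : Y -> Y) (phi z : Y) (t : R) (u : Y) : Prop :=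
  exists w, HX D phi w /\ Pr phi (Fmap L N (vadd w (vscal t phi))) = z /\
            u = vadd w (vscal t phi).

Definition fiber (D : Y -> Prop) (L N : Y -> Y) (phi z : Y) (u : Y) : Prop :=
  exists t, is_u D L N phi z t u.

(** Hypotheses (V+) and (V-) (with common ball and constants). *)
Definition hyp_V (D : Y -> Prop) (L N : Y -> Y) (lam : R) (phi : Y) : Prop :=
  forall z0, HY phi z0 ->
    exists r eps T cp cm, 0 < r /\ 0 < eps /\ 0 < T /\
      forall z, HY phi z -> distY z z0 < r ->
        (forall t u, t > T -> is_u D L N phi z t u ->
            inner (N u) phi > (lam + eps) * t + cp) /\
        (forall t u, t < - T -> is_u D L N phi z t u ->
            inner (N u) phi > (lam - eps) * t + cm).

Definition F_proper (D : Y -> Prop) (L N : Y -> Y) : Prop :=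
  forall K, compact_in (fun _ => True) distY K ->
    compact_in D (graph_dist L) (fun u => D u /\ K (Fmap L N u)).

Definition affine_line (phi z : Y) (y : Y) : Prop :=
  exists s, y = vadd z (vscal s phi).

Definition fiber_proper (D : Y -> Prop) (L N : Y -> Y) (phi z : Y) : Prop :=
  forall K, compact_in (affine_line phi z) distY K ->
    compact_in (fiber D L N phi z) (graph_dist L)
      (fun u => fiber D L N phi z u /\ K (Fmap L N u)).

End Defs.

(* Main.v *)
Require Import Defs.
From Stdlib Require Import Reals Lra Lia Psatz List Classical ClassicalEpsilon ZArith.
From Stdlib Require Rtopology.
Open Scope R_scope.

Arguments vadd_assoc {r} _ _ _.
Arguments vadd_comm {r} _ _.
Arguments vadd_0 {r} _.
Arguments vadd_opp {r} _.
Arguments vscal_1 {r} _.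
Arguments vscal_assoc {r} _ _ _.
Arguments vscal_distr_v {r} _ _ _.
Arguments vscal_distr_s {r} _ _ _.
Arguments inner_sym {r} _ _.
Arguments inner_add_l {r} _ _ _.
Arguments inner_scal_l {r} _ _ _.
Arguments inner_pos {r} _.
Arguments inner_def {r} _ _.
Arguments complete {r} _ _.

Section Basics.
Context {Y : RHilbert}.
Implicit Types x y z : Y.

Lemma vadd_0l x : vadd vzero x = x.
Proof. rewrite vadd_comm; apply vadd_0. Qed.

Lemma vscal_0 x : vscal 0 x = vzero.
Proof.
  assert (H : vscal 0 x = vadd (vscal 0 x) (vscal 0 x)).
  { rewrite <- vscal_distr_s. f_equal; ring. }
  assert (H2 : vadd (vscal 0 x) (vopp (vscal 0 x)) = vzero) by apply vadd_opp.
  rewrite H in H2 at 1. rewrite <- vadd_assoc, vadd_opp, vadd_0 in H2. exact H2.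
Qed.

Lemma vopp_scal x : vopp x = vscal (-1) x.
Proof.
  assert (H : vadd x (vscal (-1) x) = vzero).
  { rewrite <- (vscal_1 x) at 1. rewrite <- vscal_distr_s.
    replace (1 + -1) with 0 by ring. apply vscal_0. }
  rewrite <- (vadd_0 (vopp x)). rewrite <- H.
  rewrite vadd_assoc. rewrite (vadd_comm (vopp x) x), vadd_opp. apply vadd_0l.
Qed.

Lemma inner_add_r x y z : inner x (vadd y z) = inner x y + inner x z.
Proof. rewrite inner_sym, inner_add_l, (inner_sym y), (inner_sym z); ring. Qed.
Lemma inner_scal_r a x y : inner x (vscal a y) = a * inner x y.
Proof. rewrite inner_sym, inner_scal_l, inner_sym; ring. Qed.
Lemma inner_opp_l x y : inner (vopp x) y = - inner x y.
Proof. rewrite vopp_scal, inner_scal_l; ring. Qed.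
Lemma inner_opp_r x y : inner x (vopp y) = - inner x y.
Proof. rewrite vopp_scal, inner_scal_r; ring. Qed.
Lemma inner_sub_l x y z : inner (vsub x y) z = inner x z - inner y z.
Proof. unfold vsub; rewrite inner_add_l, inner_opp_l; ring. Qed.
Lemma inner_sub_r x y z : inner x (vsub y z) = inner x y - inner x z.
Proof. unfold vsub; rewrite inner_add_r, inner_opp_r; ring. Qed.
Lemma inner_0_l x : inner vzero x = 0.
Proof. rewrite <- (vscal_0 x), inner_scal_l; ring. Qed.
Lemma inner_0_r x : inner x vzero = 0.
Proof. rewrite <- (vscal_0 x), inner_scal_r; ring. Qed.

Lemma veq_of_inner x y : inner (vsub x y) (vsub x y) = 0 -> x = y.
Proof.
  intro H. apply inner_def in H. unfold vsub in H.
  assert (E : vadd (vadd x (vopp y)) y = vadd vzero y) by (rewrite H; reflexivity).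
  rewrite <- vadd_assoc, (vadd_comm (vopp y) y), vadd_opp, vadd_0, vadd_0l in E.
  exact E.
Qed.

End Basics.

#[export] Hint Rewrite @inner_add_l @inner_add_r @inner_scal_l @inner_scal_r
  @inner_opp_l @inner_opp_r @inner_sub_l @inner_sub_r @inner_0_l @inner_0_r : vinner.

Ltac vec_eq := apply veq_of_inner; autorewrite with vinner; ring.

Section Norms.
Context {Y : RHilbert}.
Implicit Types x y z : Y.

Lemma norm_sq x : norm x * norm x = inner x x.
Proof. unfold norm. apply sqrt_sqrt, inner_pos. Qed.
Lemma norm_sq2 x : norm x ^ 2 = inner x x.
Proof. rewrite <- norm_sq; ring. Qed.
Lemma norm_nonneg x : 0 <= norm x.
Proof. apply sqrt_pos. Qed.
Lemma norm_zero : norm (@vzero Y) = 0.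
Proof. unfold norm; rewrite inner_0_l; apply sqrt_0. Qed.
Lemma norm_eq0 x : norm x = 0 -> x = vzero.
Proof. intro H. apply inner_def. rewrite <- norm_sq, H; ring. Qed.

Lemma discr (a b c : R) : 0 <= c -> (forall t, 0 <= a + 2 * b * t + c * t * t) -> b * b <= a * c.
Proof.
  intros Hc H. destruct (Req_dec c 0) as [E|E].
  - subst. destruct (Req_dec b 0) as [Eb|Eb]. { subst; nra. }
    specialize (H (-(a+1)/(2*b))).
    assert (HH : a + 2 * b * (-(a+1)/(2*b)) + 0 * (-(a+1)/(2*b)) * (-(a+1)/(2*b)) = -1) by (field; exact Eb).
    lra.
  - specialize (H (-b/c)). assert (0 < c) by lra.
    assert (HH : a + 2 * b * (- b / c) + c * (- b / c) * (- b / c) = a - b*b/c) by (field; lra).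
    rewrite HH in H. assert (0 <= (a - b*b/c) * c) by nra.
    assert (E2 : (a - b*b/c)*c = a*c - b*b) by (field; lra). lra.
Qed.

Lemma CS x y : Rabs (inner x y) <= norm x * norm y.
Proof.
  assert (H : inner x y * inner x y <= inner x x * inner y y).
  { apply (discr (inner x x) (inner x y) (inner y y)). apply inner_pos.
    intro t. assert (H := inner_pos (vadd x (vscal t y))).
    autorewrite with vinner in H. rewrite (inner_sym y x) in H. nra. }
  rewrite <- !norm_sq in H.
  assert (0 <= norm x * norm y) by (apply Rmult_le_pos; apply norm_nonneg).
  apply Rsqr_le_abs_0 in H || idtac.
  apply Rabs_le. split; nra.
Qed.

Lemma norm_scal a x : norm (vscal a x) = Rabs a * norm x.
Proof.
  unfold norm. autorewrite with vinner. rewrite <- Rmult_assoc, sqrt_mult.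
  - rewrite sqrt_square_abs || idtac. f_equal. rewrite <- Rabs_sqr_le || idtac.
    replace (a*a) with (Rsqr a) by reflexivity. apply sqrt_Rsqr_abs.
  - apply Rle_0_sqr.
  - apply inner_pos.
Qed.

Lemma norm_triangle x y : norm (vadd x y) <= norm x + norm y.
Proof.
  apply Rsqr_incr_0_var; [|apply Rplus_le_le_0_compat; apply norm_nonneg].
  unfold Rsqr. rewrite norm_sq. autorewrite with vinner.
  rewrite (inner_sym y x). rewrite <- (norm_sq x), <- (norm_sq y).
  assert (H := CS x y). apply Rabs_le_between in H || (pose proof (Rle_abs (inner x y)); idtac).
  pose proof (Rle_abs (inner x y)). nra.
Qed.

Lemma norm_opp x : norm (vopp x) = norm x.
Proof. rewrite vopp_scal, norm_scal. replace (Rabs (-1)) with 1. ring.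
  rewrite Rabs_left; lra. Qed.

Lemma norm_sub_sym x y : norm (vsub x y) = norm (vsub y x).
Proof.
  replace (vsub x y) with (vopp (vsub y x)) by vec_eq. apply norm_opp.
Qed.

Lemma norm_sub_tri x y z : norm (vsub x z) <= norm (vsub x y) + norm (vsub y z).
Proof.
  replace (vsub x z) with (vadd (vsub x y) (vsub y z)) by vec_eq. apply norm_triangle.
Qed.

Lemma norm_sub_rev x y : Rabs (norm x - norm y) <= norm (vsub x y).
Proof.
  apply Rabs_le. split.
  - pose proof (norm_sub_tri y x vzero).
    replace (vsub y vzero) with y in H by vec_eq. replace (vsub x vzero) with x in H by vec_eq.
    rewrite norm_sub_sym in H. lra.
  - pose proof (norm_sub_tri x y vzero).
    replace (vsub y vzero) with y in H by vec_eq. replace (vsub x vzero) with x in H by vec_eq.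
    lra.
Qed.

Lemma norm_add_le3 x y z : norm (vadd (vadd x y) z) <= norm x + norm y + norm z.
Proof. pose proof (norm_triangle (vadd x y) z). pose proof (norm_triangle x y). lra. Qed.

Lemma inner_le x y : inner x y <= norm x * norm y.
Proof. pose proof (CS x y). pose proof (Rle_abs (inner x y)). lra. Qed.

End Norms.

Lemma choice_fun {A B : Type} (P : A -> B -> Prop) :
  (forall a, exists b, P a b) -> exists f : A -> B, forall a, P a (f a).
Proof.
  intro H. exists (fun a => proj1_sig (constructive_indefinite_description _ (H a))).
  intro a. exact (proj2_sig (constructive_indefinite_description _ (H a))).
Qed.

Lemma inv_small (e : R) : 0 < e -> exists N : nat, / (INR N + 1) < e.
Proof.
  intro He. destruct (archimed (/ e)) as [H1 _].
  assert (0 <= IZR (up (/e))). { pose proof (Rinv_0_lt_compat e He). lra. }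
  destruct (Z.le_gt_cases 0 (up (/e))) as [Hz|Hz]; [|apply IZR_lt in Hz; lra].
  exists (Z.to_nat (up (/ e))). rewrite INR_IZR_INZ, Z2Nat.id by exact Hz.
  assert (Hp : 0 < IZR (up (/ e)) + 1) by lra.
  apply (Rmult_lt_reg_l (IZR (up (/e)) + 1)); [exact Hp|].
  rewrite Rinv_r by lra.
  apply (Rmult_lt_reg_l (/ e)); [apply Rinv_0_lt_compat; exact He|].
  replace (/ e * ((IZR (up (/ e)) + 1) * e)) with (IZR (up (/ e)) + 1) by (field; lra).
  lra.
Qed.

Lemma inv_le_mono (j N : nat) : (N <= j)%nat -> / (INR j + 1) <= / (INR N + 1).
Proof.
  intro H. apply Rinv_le_contravar. pose proof (pos_INR N); lra.
  apply le_INR in H; lra.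
Qed.

Lemma inv_pos_nat (j : nat) : 0 < / (INR j + 1).
Proof. apply Rinv_0_lt_compat. pose proof (pos_INR j); lra. Qed.

Section Compact.
Context {Y : RHilbert}.

Definition pmetric (d : Y -> Y -> R) : Prop :=
  (forall a, d a a = 0) /\ (forall a b, d a b = d b a) /\ (forall a b c, d a c <= d a b + d b c).

Definition cluster (d : Y -> Y -> R) (p : Y) (x : nat -> Y) : Prop :=
  forall e, 0 < e -> forall N, exists k, (N <= k)%nat /\ d p (x k) < e.

Definition conv (d : Y -> Y -> R) (p : Y) (x : nat -> Y) : Prop :=
  forall e, 0 < e -> exists N, forall k, (N <= k)%nat -> d p (x k) < e.

Definition seqcomp (d : Y -> Y -> R) (K : Y -> Prop) : Prop :=
  forall x : nat -> Y, (forall k, K (x k)) -> exists p, K p /\ cluster d p x.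

Lemma extract d p x : cluster d p x ->
  exists s : nat -> nat, (forall j, (j <= s j)%nat) /\ conv d p (fun j => x (s j)).
Proof.
  intro H.
  assert (H' : forall j, exists k, (j <= k)%nat /\ d p (x k) < / (INR j + 1)).
  { intro j. apply H. apply inv_pos_nat. }
  apply choice_fun in H'. destruct H' as [s Hs]. exists s. split.
  - intro j; apply Hs.
  - intros e He. destruct (inv_small e He) as [N HN]. exists N. intros k Hk.
    destruct (Hs k) as [_ H2]. pose proof (inv_le_mono k N Hk). lra.
Qed.

Lemma conv_cluster d p x (s : nat -> nat) : (forall j, (j <= s j)%nat) ->
  conv d p (fun j => x (s j)) -> cluster d p x.
Proof.
  intros Hs Hc e He N. destruct (Hc e He) as [M HM].
  exists (s (max N M)). split.
  - specialize (Hs (max N M)). lia.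
  - apply HM. lia.
Qed.

Lemma ball_open S d c r : pmetric d -> open_in S d (fun y => d c y < r).
Proof.
  intros [H0 [Hsym Htri]] x Sx Hx. exists (r - d c x). split; [lra|].
  intros y Sy Hy. pose proof (Htri c x y). lra.
Qed.

Lemma list_max {A : Type} (l : list A) (g : A -> nat) : exists M, forall a, In a l -> (g a <= M)%nat.
Proof.
  induction l as [|a l IH]. { exists 0%nat. intros b []. }
  destruct IH as [M HM]. exists (max (g a) M). intros b [<-|Hb]. lia. specialize (HM b Hb). lia.
Qed.

Lemma list_choose {A B : Type} (l : list A) (Q : A -> B -> Prop) :
  (forall a, In a l -> exists b, Q a b) -> exists lb, forall a, In a l -> exists b, In b lb /\ Q a b.
Proof.
  induction l as [|a l IH]; intro H. { exists nil. intros b []. }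
  destruct (H a (or_introl eq_refl)) as [b Hb].
  destruct IH as [lb Hlb]. { intros a' Ha'. apply H. right; exact Ha'. }
  exists (b :: lb). intros a' [<-|Ha']. exists b. split; [left; reflexivity|exact Hb].
  destruct (Hlb a' Ha') as [b' [Hb'1 Hb'2]]. exists b'. split; [right; exact Hb'1|exact Hb'2].
Qed.

Lemma C1 S d K : pmetric d -> compact_in S d K -> seqcomp d K.
Proof.
  intros Hd [HKS Hc] x Hx. apply NNPP. intro Hno.
  assert (Hp : forall p : {p | K p}, exists eN : R * nat, 0 < fst eN /\
     forall k, (snd eN <= k)%nat -> ~ d (proj1_sig p) (x k) < fst eN).
  { intros [p Kp]. simpl. apply NNPP. intro H. apply Hno. exists p. split; [exact Kp|].
    intros e He N. apply NNPP. intro H2. apply H. exists (e, N). simpl. split; [exact He|].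
    intros k Hk H3. apply H2. exists k. auto. }
  apply choice_fun in Hp. destruct Hp as [ef Hef].
  destruct (Hc {p | K p} (fun p y => d (proj1_sig p) y < fst (ef p))) as [l Hl].
  - intro i. apply ball_open. exact Hd.
  - intros y Ky. exists (exist _ y Ky). simpl. destruct (Hef (exist _ y Ky)) as [He _].
    destruct Hd as [H0 _]. rewrite H0. exact He.
  - destruct (list_max l (fun p => snd (ef p))) as [M HM].
    destruct (Hl (x M) (Hx M)) as [i [Hi1 Hi2]].
    destruct (Hef i) as [_ Hi]. apply (Hi M). apply HM; exact Hi1. exact Hi2.
Qed.

Lemma C2 S d K : pmetric d -> (forall x, K x -> S x) -> seqcomp d K -> compact_in S d K.
Proof.
  intros Hd HKS Hsc. split; [exact HKS|]. intros I U HU Hcov.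
  destruct Hd as [H0 [Hsym Htri]].
  (* Lebesgue number *)
  assert (Leb : exists e, 0 < e /\ forall x, K x -> exists i, forall y, S y -> d x y < e -> U i y).
  { apply NNPP. intro Hn.
    assert (Hb : forall j : nat, exists x, K x /\ forall i, exists y, S y /\ d x y < / (INR j + 1) /\ ~ U i y).
    { intro j. apply NNPP. intro H. apply Hn. exists (/ (INR j + 1)). split. apply inv_pos_nat.
      intros x Kx. apply NNPP. intro H2. apply H. exists x. split; [exact Kx|].
      intro i. apply NNPP. intro H3. apply H2. exists i. intros y Sy Hy. apply NNPP. intro H4.
      apply H3. exists y. auto. }
    apply choice_fun in Hb. destruct Hb as [xs Hxs].
    destruct (Hsc xs (fun k => proj1 (Hxs k))) as [p [Kp Hcl]].
    destruct (Hcov p Kp) as [i Hi]. destruct (HU i p (HKS p Kp) Hi) as [r [Hr Hball]].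
    destruct (inv_small (r/2)) as [N HN]. lra.
    destruct (Hcl (r/2) ltac:(lra) N) as [k [Hk Hdk]].
    destruct (Hxs k) as [_ Hbad]. destruct (Hbad i) as [y [Sy [Hy Hny]]].
    apply Hny. apply Hball. exact Sy. pose proof (Htri p (xs k) y). pose proof (inv_le_mono k N Hk). lra. }
  destruct Leb as [e [He HLeb]].
  (* total boundedness *)
  assert (TB : exists l : list Y, (forall c, In c l -> K c) /\ forall x, K x -> exists c, In c l /\ d c x < e).
  { apply NNPP. intro Hn.
    assert (Hg : forall l : list Y, exists x, (forall c, In c l -> K c) -> K x /\ forall c, In c l -> ~ d c x < e).
    { intro l. destruct (classic (forall c, In c l -> K c)) as [Hl|Hl].
      - apply NNPP. intro H. apply Hn. exists l. split; [exact Hl|]. intros x Kx. apply NNPP. intro H2.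
        apply H. exists x. intros _. split; [exact Kx|]. intros c Hc Hdc. apply H2. exists c; auto.
      - exists vzero. intro H; contradiction. }
    apply choice_fun in Hg. destruct Hg as [g Hg].
    set (lst := fix lst (k : nat) : list Y := match k with O => nil | Datatypes.S k' => g (lst k') :: lst k' end).
    assert (HlK : forall k c, In c (lst k) -> K c).
    { induction k as [|k IH]; simpl. intros c []. intros c [<-|Hc]. apply (Hg (lst k) IH). apply IH, Hc. }
    assert (Hfar : forall j k, (j < k)%nat -> ~ d (g (lst j)) (g (lst k)) < e).
    { intros j k Hjk. apply (Hg (lst k) (HlK k)).
      induction k as [|k IH]. lia. simpl. destruct (Nat.eq_dec j k) as [->|Hne]. left; reflexivity.
      right. apply IH. lia. }
    destruct (Hsc (fun k => g (lst k))) as [p [Kp Hcl]].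
    { intro k. apply (Hg (lst k) (HlK k)). }
    destruct (Hcl (e/2) ltac:(lra) 0%nat) as [k1 [_ H1]].
    destruct (Hcl (e/2) ltac:(lra) (Datatypes.S k1)) as [k2 [Hk2 H2]].
    apply (Hfar k1 k2). lia. pose proof (Htri (g (lst k1)) p (g (lst k2))). rewrite Hsym in H1. lra. }
  destruct TB as [l [HlK Hl]].
  destruct (list_choose l (fun c i => forall y, S y -> d c y < e -> U i y)) as [li Hli].
  { intros c Hc. apply HLeb. apply HlK, Hc. }
  exists li. intros x Kx. destruct (Hl x Kx) as [c [Hc Hdc]].
  destruct (Hli c Hc) as [i [Hi HUi]]. exists i. split; [exact Hi|]. apply HUi. apply HKS, Kx. exact Hdc.
Qed.

End Compact.

Ltac vec_eqf := apply veq_of_inner; autorewrite with vinner; field.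

Section Ops.
Context {Y : RHilbert}.
Implicit Types (x y : Y) (S : Y -> Prop) (T : Y -> Y).

Definition nbb (S : Y -> Prop) (T : Y -> Y) (b : R) : Prop :=
  forall C, exists x, S x /\ C * norm (vsub (T x) (vscal b x)) < norm x.
Definition symm_on (S : Y -> Prop) (T : Y -> Y) : Prop :=
  forall x y, S x -> S y -> inner (T x) y = inner x (T y).
Definition maps (S : Y -> Prop) (T : Y -> Y) : Prop := forall x, S x -> S (T x).
Definition bdd_on (S : Y -> Prop) (T : Y -> Y) (C : R) : Prop :=
  forall x, S x -> norm (T x) <= C * norm x.

Lemma sub_sub S x y : subspace S -> S x -> S y -> S (vsub x y).
Proof. intros [H0 [Ha Hs]] Hx Hy. unfold vsub. rewrite vopp_scal. apply Ha; auto. Qed.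
Lemma sub_add S x y : subspace S -> S x -> S y -> S (vadd x y).
Proof. intros [H0 [Ha Hs]] Hx Hy. auto. Qed.
Lemma sub_scal S a x : subspace S -> S x -> S (vscal a x).
Proof. intros [H0 [Ha Hs]] Hx. auto. Qed.
Lemma sub_zero S : subspace S -> S vzero.
Proof. intros [H0 _]; exact H0. Qed.

Lemma lin_sub S T x y : subspace S -> linear_on S T -> S x -> S y -> T (vsub x y) = vsub (T x) (T y).
Proof.
  intros HS [Ha Hs] Hx Hy. unfold vsub. rewrite !vopp_scal. rewrite Ha, Hs; auto.
  apply sub_scal; auto.
Qed.
Lemma lin_zero S T : subspace S -> linear_on S T -> T vzero = vzero.
Proof.
  intros HS [Ha Hs]. replace (@vzero Y) with (vscal 0 (@vzero Y)) at 1 by apply vscal_0.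
  rewrite Hs. apply vscal_0. apply sub_zero; auto.
Qed.

Lemma real_polar (a b q : R) : 0 <= a -> 0 <= b -> 0 <= q ->
  (forall t, 0 < t -> 4 * t * (b*b) <= 2 * q * (a*a + t*t*(b*b))) -> b <= q * a.
Proof.
  intros Ha Hb Hq H. destruct (Req_dec b 0) as [->|Hb0]. nra.
  destruct (Req_dec a 0) as [->|Ha0].
  - exfalso. assert (Hq1 : 0 < / (q+1)) by (apply Rinv_0_lt_compat; lra).
    specialize (H (/(q+1)) Hq1).
    assert (0 < b*b) by nra.
    assert (E : 4 * / (q + 1) * (b * b) - 2 * q * (0 * 0 + / (q + 1) * / (q + 1) * (b * b))
       = (b*b) * / (q+1) * (4 - 2 * q / (q+1))) by (field; lra).
    assert (q / (q+1) < 1). { apply (Rmult_lt_reg_r (q+1)). lra. field_simplify; lra. }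
    assert (0 < (b*b) * / (q+1) * (4 - 2 * q / (q+1))).
    { apply Rmult_lt_0_compat. nra. lra. }
    lra.
  - assert (0 < a) by lra. assert (0 < b) by lra.
    specialize (H (a/b) ltac:(apply Rdiv_lt_0_compat; lra)).
    assert (E1 : 4 * (a/b) * (b*b) = 4 * a * b) by (field; lra).
    assert (E2 : a * a + a / b * (a / b) * (b * b) = 2 * a * a) by (field; lra).
    rewrite E1, E2 in H. nra.
Qed.

Lemma POLAR S T q : subspace S -> linear_on S T -> symm_on S T -> maps S T -> 0 <= q ->
  (forall y, S y -> Rabs (inner (T y) y) <= q * (norm y * norm y)) ->
  forall y, S y -> norm (T y) <= q * norm y.
Proof.
  intros HS HL Hsy Hm Hq H x Sx.
  assert (Key : forall y, S y -> 4 * inner (T x) y <= 2 * q * (norm x * norm x + norm y * norm y)).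
  { intros y Sy.
    pose proof (H (vadd x y) (sub_add _ _ _ HS Sx Sy)) as H1.
    pose proof (H (vsub x y) (sub_sub _ _ _ HS Sx Sy)) as H2.
    destruct HL as [Ha Hs].
    rewrite Ha in H1 by auto. rewrite (lin_sub S T) in H2 by (auto; split; auto).
    rewrite !norm_sq in H1, H2. rewrite !norm_sq.
    autorewrite with vinner in H1, H2.
    assert (E1 : inner (T y) x = inner (T x) y) by (rewrite Hsy by auto; apply inner_sym).
    assert (E2 : inner y x = inner x y) by apply inner_sym.
    rewrite E1, E2 in H1, H2.
    match type of H1 with Rabs ?e <= _ => pose proof (Rle_abs e) as A1 end.
    match type of H2 with Rabs ?e <= _ => pose proof (Rle_abs (- e)) as A2; rewrite Rabs_Ropp in A2 end.
    nra. }
  apply real_polar; try apply norm_nonneg; try exact Hq.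
  intros t Ht. specialize (Key (vscal t (T x)) (sub_scal _ _ _ HS (Hm x Sx))).
  rewrite inner_scal_r, norm_scal, Rabs_pos_eq in Key by lra.
  rewrite <- (norm_sq (T x)) in Key. nra.
Qed.

Lemma CS_form S (B : Y -> Y -> R) : subspace S ->
  (forall x y z, S x -> S y -> S z -> B (vadd x y) z = B x z + B y z) ->
  (forall a x y, S x -> S y -> B (vscal a x) y = a * B x y) ->
  (forall x y, S x -> S y -> B x y = B y x) ->
  (forall x, S x -> 0 <= B x x) ->
  forall x y, S x -> S y -> B x y * B x y <= B x x * B y y.
Proof.
  intros HS Hadd Hsc Hsym Hpos x y Sx Sy.
  apply discr. apply Hpos, Sy. intro t.
  pose proof (Hpos (vadd x (vscal t y)) (sub_add _ _ _ HS Sx (sub_scal _ _ _ HS Sy))) as H.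
  assert (St : S (vscal t y)) by (apply sub_scal; auto).
  assert (Sxt : S (vadd x (vscal t y))) by (apply sub_add; auto).
  assert (E : B (vadd x (vscal t y)) (vadd x (vscal t y)) = B x x + 2 * B x y * t + B y y * t * t).
  { rewrite Hadd by auto. rewrite (Hsym x) by auto. rewrite Hsc by auto.
    rewrite (Hsym y) by auto. rewrite !Hadd by auto. rewrite !Hsc by auto. rewrite (Hsym y x) by auto. ring. }
  lra.
Qed.

Lemma RAYSUP S T C M : subspace S -> linear_on S T -> symm_on S T -> maps S T -> 0 <= C -> bdd_on S T C ->
  is_lub (fun r => exists y, S y /\ norm y = 1 /\ r = inner (T y) y) M ->
  forall e, 0 < e -> exists y, S y /\ norm y = 1 /\ norm (vsub (T y) (vscal M y)) < e.
Proof.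
  intros HS HL Hsy Hm HC Hb [Hub Hlub] e He.
  destruct HL as [Ha Hs].
  assert (Hle : forall y, S y -> inner (T y) y <= M * (norm y * norm y)).
  { intros y Sy. destruct (Req_dec (norm y) 0) as [E|E].
    - rewrite E. apply norm_eq0 in E. subst y. rewrite inner_0_r. lra.
    - assert (0 < norm y) by (pose proof (norm_nonneg y); lra).
      assert (Hu : norm (vscal (/ norm y) y) = 1).
      { rewrite norm_scal, Rabs_pos_eq. field; lra. apply Rlt_le, Rinv_0_lt_compat; lra. }
      pose proof (Hub _ (ex_intro _ (vscal (/ norm y) y) (conj (sub_scal _ _ _ HS Sy) (conj Hu eq_refl)))) as H1.
      rewrite Hs in H1 by auto. autorewrite with vinner in H1.
      apply (Rmult_le_compat_r (norm y * norm y)) in H1; [|nra].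
      replace (/ norm y * (/ norm y * inner (T y) y) * (norm y * norm y)) with (inner (T y) y) in H1 by (field; lra).
      exact H1. }
  set (P := fun y => vsub (vscal M y) (T y)).
  set (B := fun a b => inner (P a) b).
  assert (SP : forall y, S y -> S (P y)). { intros y Sy. apply sub_sub; auto. apply sub_scal; auto. }
  assert (HCS : forall a b, S a -> S b -> B a b * B a b <= B a a * B b b).
  { apply (CS_form S B HS).
    - intros x y z Sx Sy Sz. unfold B, P. rewrite Ha by auto. autorewrite with vinner. ring.
    - intros a x y Sx Sy. unfold B, P. rewrite Hs by auto. autorewrite with vinner. ring.
    - intros x y Sx Sy. unfold B, P. autorewrite with vinner. rewrite Hsy by auto.
      rewrite (inner_sym x y), (inner_sym x (T y)). ring.
    - intros x Sx. unfold B, P. autorewrite with vinner. pose proof (Hle x Sx).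
      rewrite <- norm_sq. lra. }
  set (eta := e * e / (Rabs M + C + 1)).
  assert (Heta : 0 < eta) by (unfold eta; apply Rdiv_lt_0_compat; [nra|pose proof (Rabs_pos M); lra]).
  assert (Hex : exists y, S y /\ norm y = 1 /\ M - eta < inner (T y) y).
  { apply NNPP. intro H. assert (Hub2 : is_upper_bound (fun r => exists y, S y /\ norm y = 1 /\ r = inner (T y) y) (M - eta)).
    { intros r [y [Sy [Hy ->]]]. apply Rnot_lt_le. intro H2. apply H. exists y; auto. }
    specialize (Hlub _ Hub2). lra. }
  destruct Hex as [y [Sy [Hy1 Hy2]]]. exists y. split; [exact Sy|]. split; [exact Hy1|].
  set (v := P y).
  assert (Byy : B y y < eta). { unfold B, P. autorewrite with vinner. rewrite <- norm_sq, Hy1. lra. }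
  assert (Byy0 : 0 <= B y y). { unfold B, P. autorewrite with vinner. pose proof (Hle y Sy). rewrite <- norm_sq. lra. }
  assert (Bv : B y v = norm v * norm v). { unfold B. rewrite norm_sq. reflexivity. }
  assert (Bvv : B v v <= (Rabs M + C) * (norm v * norm v)).
  { unfold B. pose proof (inner_le (P v) v). 
    assert (norm (P v) <= (Rabs M + C) * norm v).
    { unfold P. unfold vsub. eapply Rle_trans. apply norm_triangle. rewrite norm_opp, norm_scal.
      pose proof (Hb v (SP y Sy)). lra. }
    pose proof (norm_nonneg v). nra. }
  pose proof (HCS y v Sy (SP y Sy)) as H1. rewrite Bv in H1.
  assert (Hv2 : norm v * norm v <= eta * (Rabs M + C)).
  { destruct (Req_dec (norm v) 0) as [E|E]. rewrite E. pose proof (Rabs_pos M). nra.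
    assert (0 < norm v * norm v) by (pose proof (norm_nonneg v); nra).
    assert (norm v * norm v * (norm v * norm v) <= eta * (Rabs M + C) * (norm v * norm v)).
    { eapply Rle_trans. exact H1.
      assert (Bvv0 : 0 <= B v v). { unfold B, P. autorewrite with vinner. pose proof (Hle v (SP y Sy)). rewrite <- norm_sq. lra. }
      apply Rle_trans with (eta * B v v). apply Rmult_le_compat_r; lra.
      rewrite Rmult_assoc. apply Rmult_le_compat_l; lra. }
    nra. }
  assert (Hv3 : norm v * norm v < e * e).
  { eapply Rle_lt_trans. exact Hv2. unfold eta.
    assert (0 <= Rabs M + C) by (pose proof (Rabs_pos M); lra).
    apply (Rmult_lt_reg_r (Rabs M + C + 1)). lra.
    replace (e * e / (Rabs M + C + 1) * (Rabs M + C) * (Rabs M + C + 1)) with (e*e*(Rabs M + C)) by (field; lra).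
    nra. }
  assert (Ev : norm (vsub (T y) (vscal M y)) = norm v). { unfold v, P. apply norm_sub_sym. }
  rewrite Ev. pose proof (norm_nonneg v). nra.
Qed.

Lemma approx_nbb S T b : (forall e, 0 < e -> exists y, S y /\ norm y = 1 /\ norm (vsub (T y) (vscal b y)) < e) ->
  nbb S T b.
Proof.
  intros H C. destruct (H (/ (Rabs C + 1))) as [y [Sy [Hy1 Hy2]]].
  apply Rinv_0_lt_compat; pose proof (Rabs_pos C); lra.
  exists y. split; [exact Sy|]. rewrite Hy1.
  pose proof (Rle_abs C). pose proof (norm_nonneg (vsub (T y) (vscal b y))).
  apply Rle_lt_trans with (Rabs C * norm (vsub (T y) (vscal b y))). pose proof (Rabs_pos C). nra.
  apply (Rmult_lt_compat_l (Rabs C + 1)) in Hy2; [|pose proof (Rabs_pos C); lra].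
  rewrite Rinv_r in Hy2 by (pose proof (Rabs_pos C); lra). nra.
Qed.

Lemma RAY S T C : subspace S -> linear_on S T -> symm_on S T -> maps S T -> 0 <= C -> bdd_on S T C ->
  exists q, 0 <= q /\ (forall y, S y -> Rabs (inner (T y) y) <= q * (norm y * norm y)) /\
    (q = 0 \/ nbb S T q \/ nbb S T (-q)).
Proof.
  intros HS HL Hsy Hm HC Hb.
  destruct (classic (exists y0, S y0 /\ y0 <> vzero)) as [[y0 [Sy0 Hy0]]|Hno].
  2:{ exists 0. split; [lra|]. split; [|left; reflexivity]. intros y Sy.
      assert (y = vzero). { apply NNPP. intro H. apply Hno. exists y; auto. }
      subst y. rewrite inner_0_r, Rabs_R0. lra. }
  assert (Hn0 : 0 < norm y0). { pose proof (norm_nonneg y0). destruct (Req_dec (norm y0) 0) as [E|E].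
     apply norm_eq0 in E; contradiction. lra. }
  set (u0 := vscal (/ norm y0) y0).
  assert (Su0 : S u0) by (apply sub_scal; auto).
  assert (Hu0 : norm u0 = 1). { unfold u0. rewrite norm_scal, Rabs_pos_eq. field; lra. apply Rlt_le, Rinv_0_lt_compat; lra. }
  set (T' := fun y => vopp (T y)).
  assert (HL' : linear_on S T').
  { destruct HL as [Ha Hs]. split; intros; unfold T'; [rewrite Ha by auto|rewrite Hs by auto]; vec_eq. }
  assert (Hsy' : symm_on S T'). { intros x y Sx Sy. unfold T'. autorewrite with vinner. rewrite Hsy; auto. }
  assert (Hm' : maps S T'). { intros x Sx. unfold T'. rewrite vopp_scal. apply sub_scal; auto. }
  assert (Hb' : bdd_on S T' C). { intros x Sx. unfold T'. rewrite norm_opp. apply Hb, Sx. }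
  assert (Hbound : forall T0, bdd_on S T0 C -> bound (fun r => exists y, S y /\ norm y = 1 /\ r = inner (T0 y) y)).
  { intros T0 Hb0. exists C. intros r [y [Sy [Hy ->]]]. eapply Rle_trans. apply inner_le.
    rewrite Hy. pose proof (Hb0 y Sy). rewrite Hy in H. lra. }
  destruct (completeness _ (Hbound T Hb) (ex_intro _ _ (ex_intro _ u0 (conj Su0 (conj Hu0 eq_refl))))) as [M HM].
  destruct (completeness _ (Hbound T' Hb') (ex_intro _ _ (ex_intro _ u0 (conj Su0 (conj Hu0 eq_refl))))) as [M' HM'].
  pose proof (RAYSUP S T C M HS HL Hsy Hm HC Hb HM) as AM.
  pose proof (RAYSUP S T' C M' HS HL' Hsy' Hm' HC Hb' HM') as AM'.
  assert (AM2 : nbb S T M) by (apply approx_nbb; exact AM).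
  assert (AM2' : nbb S T (- M')).
  { apply approx_nbb. intros e He. destruct (AM' e He) as [y [Sy [Hy1 Hy2]]]. exists y. split; auto. split; auto.
    replace (vsub (T y) (vscal (- M') y)) with (vopp (vsub (T' y) (vscal M' y))) by (unfold T'; vec_eq).
    rewrite norm_opp; exact Hy2. }
  assert (Hle : forall T0 M0, is_lub (fun r => exists y, S y /\ norm y = 1 /\ r = inner (T0 y) y) M0 ->
     linear_on S T0 -> forall y, S y -> inner (T0 y) y <= M0 * (norm y * norm y)).
  { intros T0 M0 [Hub _] [Ha Hs] y Sy. destruct (Req_dec (norm y) 0) as [E|E].
    - rewrite E. apply norm_eq0 in E. subst y. rewrite inner_0_r. lra.
    - assert (0 < norm y) by (pose proof (norm_nonneg y); lra).
      assert (Hu : norm (vscal (/ norm y) y) = 1).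
      { rewrite norm_scal, Rabs_pos_eq. field; lra. apply Rlt_le, Rinv_0_lt_compat; lra. }
      pose proof (Hub _ (ex_intro _ (vscal (/ norm y) y) (conj (sub_scal _ _ _ HS Sy) (conj Hu eq_refl)))) as H1.
      rewrite Hs in H1 by auto. autorewrite with vinner in H1.
      apply (Rmult_le_compat_r (norm y * norm y)) in H1; [|nra].
      replace (/ norm y * (/ norm y * inner (T0 y) y) * (norm y * norm y)) with (inner (T0 y) y) in H1 by (field; lra).
      exact H1. }
  exists (Rmax (Rabs M) (Rabs M')). split. { eapply Rle_trans. apply Rabs_pos. apply Rmax_l. }
  split.
  - intros y Sy. pose proof (Hle T M HM HL y Sy) as H1. pose proof (Hle T' M' HM' HL' y Sy) as H2.
    unfold T' in H2. rewrite inner_opp_l in H2.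
    pose proof (Rmax_l (Rabs M) (Rabs M')). pose proof (Rmax_r (Rabs M) (Rabs M')).
    pose proof (Rle_abs M). pose proof (Rle_abs M'). pose proof (Rle_abs (-M)). pose proof (Rle_abs (-M')).
    rewrite Rabs_Ropp in *.
    assert (0 <= norm y * norm y) by (pose proof (norm_nonneg y); nra).
    apply Rabs_le. split; nra.
  - right. unfold Rmax. destruct (Rle_dec (Rabs M) (Rabs M')).
    + unfold Rabs. destruct (Rcase_abs M'). left; exact AM2'. right; exact AM2'.
    + unfold Rabs. destruct (Rcase_abs M). right. replace (- - M) with M by ring. exact AM2. left; exact AM2.
Qed.

End Ops.

Section Res.
Context {Y : RHilbert}.
Implicit Types (x y : Y) (S : Y -> Prop) (T : Y -> Y).
Context (D : Y -> Prop) (L : Y -> Y).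

Definition Lm (nu : R) (x : Y) : Y := vsub (L x) (vscal nu x).

Lemma TRANS S T (D' : Y -> Prop) nu b : b <> 0 ->
  (forall y, S y -> D' (T y) /\ Lm nu (T y) = y) -> nbb S T b -> nbb D' L (nu + / b).
Proof.
  intros Hb HT Hn C.
  destruct (Hn ((Rabs C / Rabs b + 1) / Rabs b)) as [y [Sy Hy]].
  destruct (HT y Sy) as [HD HL].
  exists (T y). split; [exact HD|].
  assert (E : vsub (L (T y)) (vscal (nu + / b) (T y)) = vscal (- / b) (vsub (T y) (vscal b y))).
  { replace (vsub (L (T y)) (vscal (nu + / b) (T y))) with (vsub (Lm nu (T y)) (vscal (/ b) (T y)))
      by (unfold Lm; vec_eq).
    rewrite HL. vec_eqf. exact Hb. }
  rewrite E, norm_scal, Rabs_Ropp, Rabs_inv.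
  set (e := norm (vsub (T y) (vscal b y))) in *.
  assert (Hab : 0 < Rabs b) by (apply Rabs_pos_lt; exact Hb).
  assert (He : 0 <= e) by apply norm_nonneg.
  assert (Hx : Rabs b * norm y - e <= norm (T y)).
  { pose proof (norm_sub_rev (T y) (vscal b y)) as H. rewrite norm_scal in H. fold e in H.
    pose proof (Rle_abs (-(norm (T y) - Rabs b * norm y))) as H2. rewrite Rabs_Ropp in H2.
    lra. }
  assert (Hy' : (Rabs C / Rabs b + 1) * e < Rabs b * norm y).
  { apply (Rmult_lt_compat_l (Rabs b)) in Hy; [|exact Hab].
    replace (Rabs b * ((Rabs C / Rabs b + 1) / Rabs b * e)) with ((Rabs C / Rabs b + 1) * e) in Hy by (field; lra).
    exact Hy. }
  apply Rle_lt_trans with (Rabs C * (/ Rabs b * e)).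
  { pose proof (Rle_abs C). assert (0 <= / Rabs b * e) by (apply Rmult_le_pos; [apply Rlt_le, Rinv_0_lt_compat|]; lra). nra. }
  replace (Rabs C * (/ Rabs b * e)) with (Rabs C / Rabs b * e) by (field; lra). lra.
Qed.

Lemma res_not_nbb mu : in_resolvent D L mu -> ~ nbb D L mu.
Proof.
  intros [Rm [H1 [H2 [C HC]]]] Hn. destruct (Hn C) as [x [Dx Hx]].
  specialize (HC (vsub (L x) (vscal mu x))). rewrite H2 in HC by exact Dx. lra.
Qed.

Hypothesis SA : self_adjoint D L.

Lemma SA_sub : subspace D. Proof. apply SA. Qed.
Lemma SA_lin : linear_on D L. Proof. apply SA. Qed.
Lemma SA_sym : forall x y, D x -> D y -> inner (L x) y = inner x (L y). Proof. apply SA. Qed.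

Lemma Lm_add nu x y : D x -> D y -> Lm nu (vadd x y) = vadd (Lm nu x) (Lm nu y).
Proof. intros Dx Dy. unfold Lm. rewrite (proj1 SA_lin) by auto. vec_eq. Qed.
Lemma Lm_scal nu a x : D x -> Lm nu (vscal a x) = vscal a (Lm nu x).
Proof. intros Dx. unfold Lm. rewrite (proj2 SA_lin) by auto. vec_eq. Qed.
Lemma Lm_sym nu x y : D x -> D y -> inner (Lm nu x) y = inner x (Lm nu y).
Proof. intros Dx Dy. unfold Lm. autorewrite with vinner. rewrite SA_sym by auto. rewrite (inner_sym x y). ring. Qed.

Definition resolv (mu : R) (Rm : Y -> Y) (C : R) : Prop :=
  (forall y, D (Rm y) /\ Lm mu (Rm y) = y) /\ (forall x, D x -> Rm (Lm mu x) = x) /\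
  0 <= C /\ (forall y, norm (Rm y) <= C * norm y).

Lemma resolv_of mu : in_resolvent D L mu -> exists Rm C, resolv mu Rm C.
Proof.
  intros [Rm [H1 [H2 [C HC]]]]. exists Rm, (Rmax C 0). split; [exact H1|]. split; [exact H2|].
  split. apply Rmax_r. intro y. eapply Rle_trans. apply HC. apply Rmult_le_compat_r. apply norm_nonneg. apply Rmax_l.
Qed.

Lemma resolv_lin mu Rm C : resolv mu Rm C -> linear_on (fun _ => True) Rm.
Proof.
  intros [H1 [H2 _]]. split.
  - intros a b _ _. rewrite <- (H2 (vadd (Rm a) (Rm b))). rewrite Lm_add by apply H1.
    rewrite (proj2 (H1 a)), (proj2 (H1 b)). reflexivity. apply sub_add. apply SA_sub. apply H1. apply H1.
  - intros a x _. rewrite <- (H2 (vscal a (Rm x))). rewrite Lm_scal by apply H1.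
    rewrite (proj2 (H1 x)). reflexivity. apply sub_scal. apply SA_sub. apply H1.
Qed.

Lemma resolv_sym mu Rm C : resolv mu Rm C -> symm_on (fun _ => True) Rm.
Proof.
  intros [H1 [H2 _]] a b _ _.
  rewrite <- (proj2 (H1 b)) at 1. rewrite <- (proj2 (H1 a)) at 2.
  rewrite <- Lm_sym by apply H1. reflexivity.
Qed.

Lemma sub_True : subspace (fun _ : Y => True).
Proof. split; auto. Qed.

Lemma DIST nu r : in_resolvent D L nu -> 0 < r ->
  (forall mu, 0 < Rabs (mu - nu) < r -> in_resolvent D L mu) ->
  forall x, D x -> r * norm x <= norm (Lm nu x).
Proof.
  intros Hres Hr Hnb x Dx.
  destruct (resolv_of nu Hres) as [Rm [C HR]].
  pose proof HR as [H1 [H2 [HC Hb]]].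
  destruct (RAY (fun _ => True) Rm C sub_True (resolv_lin _ _ _ HR) (resolv_sym _ _ _ HR) (fun _ _ => I) HC
     (fun y _ => Hb y)) as [q [Hq [Hform Hcase]]].
  assert (Hqr : q * r <= 1).
  { destruct Hcase as [->|[Hn|Hn]]. lra.
    - destruct (Req_dec q 0) as [->|Hq0]. lra.
      pose proof (TRANS _ _ D nu q Hq0 (fun y _ => H1 y) Hn) as Hn2.
      apply NNPP. intro Hc. apply (res_not_nbb _ (Hnb (nu + / q) ltac:(
        replace (nu + / q - nu) with (/ q) by ring; rewrite Rabs_pos_eq by (apply Rlt_le, Rinv_0_lt_compat; lra);
        split; [apply Rinv_0_lt_compat; lra|];
        apply (Rmult_lt_reg_l q); [lra|]; rewrite Rinv_r by lra; lra))).
      exact Hn2.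
    - destruct (Req_dec q 0) as [->|Hq0]. lra.
      assert (Hq1 : -q <> 0) by lra.
      pose proof (TRANS _ _ D nu (-q) Hq1 (fun y _ => H1 y) Hn) as Hn2.
      apply NNPP. intro Hc. apply (res_not_nbb _ (Hnb (nu + / - q) ltac:(
        replace (nu + / - q - nu) with (- / q) by (field; lra); rewrite Rabs_Ropp;
        rewrite Rabs_pos_eq by (apply Rlt_le, Rinv_0_lt_compat; lra);
        split; [apply Rinv_0_lt_compat; lra|];
        apply (Rmult_lt_reg_l q); [lra|]; rewrite Rinv_r by lra; lra))).
      exact Hn2. }
  pose proof (POLAR (fun _ => True) Rm q sub_True (resolv_lin _ _ _ HR) (resolv_sym _ _ _ HR) (fun _ _ => I) Hq
     (fun y _ => Hform y I) (Lm nu x) I) as HP.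
  rewrite H2 in HP by exact Dx.
  pose proof (norm_nonneg (Lm nu x)). nra.
Qed.

End Res.

Lemma pow_small (r e : R) : 0 <= r < 1 -> 0 < e -> exists N, forall n, (N <= n)%nat -> r ^ n < e.
Proof.
  intros Hr He. destruct (pow_lt_1_zero r ltac:(rewrite Rabs_pos_eq; lra) e He) as [N HN].
  exists N. intros n Hn. specialize (HN n Hn). rewrite Rabs_pos_eq in HN. exact HN. apply pow_le; lra.
Qed.

Lemma small_zero (a : R) : 0 <= a -> (forall e, 0 < e -> a < e) -> a = 0.
Proof. intros H1 H2. destruct (Req_dec a 0) as [E|E]. exact E. specialize (H2 a ltac:(lra)). lra. Qed.

Section Geo.
Context {Y : RHilbert}.
Implicit Types (x y : Y).

Lemma GEO (s : nat -> Y) (K r : R) : 0 <= r < 1 ->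
  (forall j, norm (vsub (s (S j)) (s j)) <= K * r ^ j) ->
  exists l, forall j, norm (vsub l (s j)) <= K * r ^ j / (1 - r).
Proof.
  intros Hr Hs.
  assert (HK : 0 <= K). { pose proof (Hs 0%nat). simpl in H. rewrite Rmult_1_r in H. pose proof (norm_nonneg (vsub (s 1%nat) (s 0%nat))). lra. }
  assert (Hpart : forall j k, norm (vsub (s (j + k)%nat) (s j)) <= K * r ^ j * (1 - r ^ k) / (1 - r)).
  { intros j k. induction k as [|k IH].
    - rewrite Nat.add_0_r. replace (vsub (s j) (s j)) with (@vzero Y) by vec_eq. rewrite norm_zero.
      simpl. replace (K * r ^ j * (1 - 1) / (1 - r)) with 0 by (field; lra). lra.
    - eapply Rle_trans. apply (norm_sub_tri _ (s (j + k)%nat)).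
      replace (j + S k)%nat with (S (j + k)) by lia.
      pose proof (Hs (j + k)%nat) as H. rewrite pow_add in H.
      replace (K * r ^ j * (1 - r ^ S k) / (1 - r)) with (K * (r ^ j * r ^ k) + K * r ^ j * (1 - r ^ k) / (1 - r))
        by (simpl; field; lra).
      lra. }
  assert (Hb : forall j k, norm (vsub (s (j + k)%nat) (s j)) <= K * r ^ j / (1 - r)).
  { intros j k. eapply Rle_trans. apply Hpart. unfold Rdiv. apply Rmult_le_compat_r.
    apply Rlt_le, Rinv_0_lt_compat; lra. pose proof (pow_le r j ltac:(lra)). pose proof (pow_le r k ltac:(lra)).
    assert (0 <= K * r ^ j) by (apply Rmult_le_pos; lra).
    assert (K * r ^ j * r ^ k >= 0) by (apply Rle_ge, Rmult_le_pos; lra).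
    lra. }
  destruct (complete s) as [l Hl].
  { intros e He. destruct (pow_small r (e * (1 - r) / (2 * (K + 1))) Hr) as [N HN].
    apply Rdiv_lt_0_compat; [nra|lra].
    exists N. intros m n Hm Hn.
    assert (HmN := Hb N (m - N)%nat). assert (HnN := Hb N (n - N)%nat).
    replace (N + (m - N))%nat with m in HmN by lia. replace (N + (n - N))%nat with n in HnN by lia.
    change (norm (vsub (s m) (s n)) < e).
    eapply Rle_lt_trans. apply (norm_sub_tri _ (s N)). rewrite (norm_sub_sym (s N) (s n)).
    specialize (HN N (le_n N)).
    assert (K * r ^ N / (1 - r) < e / 2).
    { apply (Rmult_lt_reg_r (1 - r)). lra. unfold Rdiv. rewrite Rmult_assoc, Rinv_l, Rmult_1_r by lra.
      apply Rle_lt_trans with ((K + 1) * r ^ N). pose proof (pow_le r N ltac:(lra)). nra.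
      apply (Rmult_lt_compat_l (K+1)) in HN; [|lra].
      replace ((K + 1) * (e * (1 - r) / (2 * (K + 1)))) with (e / 2 * (1 - r)) in HN by (field; lra). lra. }
    lra. }
  exists l. intro j. apply Rle_plus_epsilon. intros e He.
  destruct (Hl e He) as [N HN]. specialize (HN (max N j) (Nat.le_max_l _ _)). change (norm (vsub (s (max N j)) l) < e) in HN.
  eapply Rle_trans. apply (norm_sub_tri _ (s (max N j))). rewrite norm_sub_sym in HN.
  pose proof (Hb j (max N j - j)%nat) as H. replace (j + (max N j - j))%nat with (max N j) in H by lia. lra.
Qed.

Lemma HY_closed (phi l : Y) (s : nat -> Y) : (forall j, HY phi (s j)) ->
  (forall e, 0 < e -> exists j, norm (vsub l (s j)) < e) -> HY phi l.
Proof.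
  intros Hs Hc. unfold HY. apply NNPP. intro Hne. apply (Rabs_no_R0 _ Hne). apply small_zero. apply Rabs_pos.
  intros e He. destruct (Hc (e / (norm phi + 1))) as [j Hj].
  apply Rdiv_lt_0_compat. lra. pose proof (norm_nonneg phi); lra.
  assert (E : inner l phi = inner (vsub l (s j)) phi) by (rewrite inner_sub_l, (Hs j); ring).
  rewrite E. eapply Rle_lt_trans. apply CS.
  apply Rle_lt_trans with (norm (vsub l (s j)) * (norm phi + 1)). pose proof (norm_nonneg (vsub l (s j))). nra.
  apply (Rmult_lt_compat_r (norm phi + 1)) in Hj. 2:(pose proof (norm_nonneg phi); lra).
  replace (e / (norm phi + 1) * (norm phi + 1)) with e in Hj by (field; pose proof (norm_nonneg phi); lra). exact Hj.
Qed.

Lemma geo_close (l : Y) (s : nat -> Y) K r : 0 <= r < 1 -> (forall j, norm (vsub l (s j)) <= K * r ^ j / (1 - r)) ->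
  forall e, 0 < e -> exists N, forall j, (N <= j)%nat -> norm (vsub l (s j)) < e.
Proof.
  intros Hr H e He. destruct (pow_small r (e * (1 - r) / (Rabs K + 1)) Hr) as [N HN].
  apply Rdiv_lt_0_compat. nra. pose proof (Rabs_pos K); lra.
  exists N. intros j Hj. eapply Rle_lt_trans. apply H. specialize (HN j Hj).
  apply (Rmult_lt_reg_r (1 - r)). lra. unfold Rdiv. rewrite Rmult_assoc, Rinv_l, Rmult_1_r by lra.
  apply Rle_lt_trans with (Rabs K * r ^ j). pose proof (pow_le r j ltac:(lra)). pose proof (Rle_abs K). nra.
  apply Rle_lt_trans with ((Rabs K + 1) * r ^ j). pose proof (pow_le r j ltac:(lra)). nra.
  apply (Rmult_lt_compat_l (Rabs K + 1)) in HN; [|pose proof (Rabs_pos K); lra].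
  replace ((Rabs K + 1) * (e * (1 - r) / (Rabs K + 1))) with (e * (1 - r)) in HN by (field; pose proof (Rabs_pos K); lra).
  lra.
Qed.

End Geo.

Section Iso.
Context {Y : RHilbert}.
Implicit Types (x y : Y) (S : Y -> Prop) (T : Y -> Y).
Context (D : Y -> Prop) (L : Y -> Y) (lam : R) (phi : Y).
Hypothesis SA : self_adjoint D L.
Hypothesis EIG : simple_isolated_eigenvalue D L lam phi.

Lemma Dphi : D phi. Proof. apply EIG. Qed.
Lemma phi1 : inner phi phi = 1.
Proof. destruct EIG as [_ [H _]]. rewrite <- norm_sq, H. ring. Qed.
Lemma Lphi : L phi = vscal lam phi. Proof. apply EIG. Qed.

Lemma iso_res : exists delta, 0 < delta /\ forall mu, 0 < Rabs (mu - lam) < delta -> in_resolvent D L mu.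
Proof.
  destruct EIG as [_ [_ [_ [_ [d [Hd H]]]]]]. exists d. split; [exact Hd|].
  intros mu Hmu. apply NNPP. exact (H mu Hmu).
Qed.

Lemma Lm_phi nu : Lm L nu phi = vscal (lam - nu) phi.
Proof. unfold Lm. rewrite Lphi. vec_eq. Qed.

Lemma Lm_HY nu x : HX D phi x -> HY phi (Lm L nu x).
Proof.
  intros [Dx Hx]. unfold HY in *. rewrite (Lm_sym D L SA) by (auto; apply Dphi).
  rewrite Lm_phi, inner_scal_r, Hx. ring.
Qed.

Lemma L_HY x : HX D phi x -> HY phi (L x).
Proof.
  intro H. pose proof (Lm_HY 0 x H) as H2. unfold Lm in H2. unfold HY in *.
  rewrite inner_sub_l, inner_scal_l, (proj2 H) in H2. lra.
Qed.

Lemma res_HY mu Rm C : resolv D L mu Rm C -> mu <> lam -> forall y, HY phi y -> HY phi (Rm y).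
Proof.
  intros [H1 [H2 _]] Hmu y Hy. unfold HY in *.
  assert (E : inner (Rm y) (Lm L mu phi) = inner y phi).
  { rewrite <- (Lm_sym D L SA) by (first [apply H1|apply Dphi]). rewrite (proj2 (H1 y)). reflexivity. }
  rewrite Lm_phi, inner_scal_r, Hy in E.
  assert (lam - mu <> 0) by lra.
  apply (Rmult_eq_reg_l (lam - mu)); [lra|exact H].
Qed.

Lemma gap_ineq : exists delta, 0 < delta /\ forall x, D x ->
  delta * Rabs (inner (Lm L lam x) x) <= inner (Lm L lam x) (Lm L lam x).
Proof.
  destruct iso_res as [d [Hd Hres]]. exists d. split; [exact Hd|]. intros x Dx.
  assert (Hr : forall nu, Rabs (nu - lam) = d / 2 -> d/2 * norm x <= norm (Lm L nu x)).
  { intros nu Hnu. apply (DIST D L SA nu (d/2)). apply Hres. lra. lra.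
    intros mu Hmu. apply Hres. split.
    - pose proof (Rabs_triang (nu - mu) (mu - lam)) as H0. replace (nu - mu + (mu - lam)) with (nu - lam) in H0 by ring.
      rewrite (Rabs_minus_sym nu mu) in H0. lra.
    - pose proof (Rabs_triang (mu - nu) (nu - lam)). replace (mu - nu + (nu - lam)) with (mu - lam) in H by ring. lra.
    - exact Dx. }
  assert (E : forall s, Lm L (lam + s) x = vsub (Lm L lam x) (vscal s x)) by (intro s; unfold Lm; vec_eq).
  pose proof (Hr (lam + d/2) ltac:(replace (lam + d/2 - lam) with (d/2) by ring; rewrite Rabs_pos_eq; lra)) as A.
  pose proof (Hr (lam + - (d/2)) ltac:(replace (lam + - (d/2) - lam) with (-(d/2)) by ring; rewrite Rabs_Ropp, Rabs_pos_eq; lra)) as B.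
  rewrite E in A, B.
  assert (A2 : d/2 * norm x * (d/2 * norm x) <= norm (vsub (Lm L lam x) (vscal (d/2) x)) * norm (vsub (Lm L lam x) (vscal (d/2) x))).
  { pose proof (norm_nonneg x). apply Rmult_le_compat; nra. }
  assert (B2 : d/2 * norm x * (d/2 * norm x) <= norm (vsub (Lm L lam x) (vscal (-(d/2)) x)) * norm (vsub (Lm L lam x) (vscal (-(d/2)) x))).
  { pose proof (norm_nonneg x). apply Rmult_le_compat; nra. }
  rewrite !norm_sq in A2, B2.
  autorewrite with vinner in A2, B2.
  set (a := Lm L lam x) in *. rewrite (inner_sym x a) in A2, B2. rewrite <- (norm_sq x) in A2, B2.
  unfold Rabs. destruct (Rcase_abs (inner a x)); nra.
Qed.

End Iso.

Section Iso2.
Context {Y : RHilbert}.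
Implicit Types (x y : Y) (S : Y -> Prop) (T : Y -> Y).
Context (D : Y -> Prop) (L : Y -> Y) (lam : R) (phi : Y).
Hypothesis SA : self_adjoint D L.
Hypothesis EIG : simple_isolated_eigenvalue D L lam phi.

Lemma ISO : ~ nbb (HX D phi) L lam.
Proof.
  intro Hn.
  destruct (iso_res D L lam phi EIG) as [d1 [Hd1 Hres]].
  destruct (gap_ineq D L lam phi SA EIG) as [d [Hd Hgap]].
  set (dd := Rmin d d1).
  assert (Hdd : 0 < dd) by (unfold dd; apply Rmin_pos; lra).
  assert (Hdd1 : dd <= d) by apply Rmin_l. assert (Hdd2 : dd <= d1) by apply Rmin_r.
  set (eps := dd / 2).
  assert (Heps : 0 < eps) by (unfold eps; lra).
  set (mu0 := lam + eps).
  destruct (resolv_of D L mu0 (Hres mu0 ltac:(unfold mu0; replace (lam + eps - lam) with eps by ring;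
       rewrite Rabs_pos_eq; unfold eps; lra))) as [Rm [C HR]].
  pose proof HR as [H1 [H2 [HC Hb]]].
  assert (Hmu0 : mu0 <> lam) by (unfold mu0; lra).
  pose proof (resolv_lin D L SA _ _ _ HR) as [RLa RLs].
  pose proof (resolv_sym D L SA _ _ _ HR) as RS.
  set (beta := - / eps).
  set (P := fun y => vsub (Rm y) (vscal beta y)).
  assert (HPa : forall y, P y = vscal (/ eps) (Lm L lam (Rm y))).
  { intro y. unfold P. remember (Rm y) as x.
    assert (Hy : y = vsub (Lm L lam x) (vscal eps x)).
    { rewrite <- (proj2 (H1 y)). rewrite <- Heqx. unfold Lm, mu0. vec_eq. }
    rewrite Hy. unfold beta. vec_eqf. lra. }
  assert (Hyx : forall y, y = vsub (Lm L lam (Rm y)) (vscal eps (Rm y))).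
  { intro y. rewrite <- (proj2 (H1 y)) at 1. unfold Lm, mu0. vec_eq. }
  assert (Form : forall y, inner (P y) y = / eps * (inner (Lm L lam (Rm y)) (Lm L lam (Rm y)) - eps * inner (Lm L lam (Rm y)) (Rm y))).
  { intro y. rewrite HPa. rewrite (Hyx y) at 2. autorewrite with vinner. ring. }
  assert (Nrm : forall y, inner (P y) (P y) = / eps * / eps * inner (Lm L lam (Rm y)) (Lm L lam (Rm y))).
  { intro y. rewrite HPa. autorewrite with vinner. ring. }
  assert (Gap2 : forall y, eps * Rabs (inner (Lm L lam (Rm y)) (Rm y)) <= / 2 * inner (Lm L lam (Rm y)) (Lm L lam (Rm y))).
  { intro y. pose proof (Hgap (Rm y) (proj1 (H1 y))). pose proof (Rabs_pos (inner (Lm L lam (Rm y)) (Rm y))).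
    assert (dd * Rabs (inner (Lm L lam (Rm y)) (Rm y)) <= d * Rabs (inner (Lm L lam (Rm y)) (Rm y)))
      by (apply Rmult_le_compat_r; lra).
    unfold eps. lra. }
  assert (Pos : forall y, 0 <= inner (P y) y).
  { intro y. rewrite Form. pose proof (Gap2 y). pose proof (Rle_abs (inner (Lm L lam (Rm y)) (Rm y))).
    apply Rmult_le_pos. apply Rlt_le, Rinv_0_lt_compat; lra.
    assert (eps * inner (Lm L lam (Rm y)) (Rm y) <= eps * Rabs (inner (Lm L lam (Rm y)) (Rm y))) by (apply Rmult_le_compat_l; lra).
    assert (0 <= eps * Rabs (inner (Lm L lam (Rm y)) (Rm y))) by (apply Rmult_le_pos; [lra|apply Rabs_pos]).
    lra. }
  set (g := 2 / (3 * eps)).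
  assert (Hg : 0 < g) by (unfold g; apply Rdiv_lt_0_compat; lra).
  assert (Gap : forall y, g * inner (P y) y <= inner (P y) (P y)).
  { intro y. rewrite Form, Nrm. pose proof (Gap2 y).
    pose proof (Rle_abs (- inner (Lm L lam (Rm y)) (Rm y))) as A. rewrite Rabs_Ropp in A.
    set (A0 := inner (Lm L lam (Rm y)) (Lm L lam (Rm y))) in *.
    set (B0 := inner (Lm L lam (Rm y)) (Rm y)) in *.
    assert (Hk : g * (/ eps * (A0 - eps * B0)) <= g * (/ eps * (3 / 2 * A0))).
    { apply Rmult_le_compat_l. lra. apply Rmult_le_compat_l. apply Rlt_le, Rinv_0_lt_compat; lra.
      assert (eps * - B0 <= eps * Rabs B0) by (apply Rmult_le_compat_l; lra).
      assert (0 <= eps * Rabs B0) by (apply Rmult_le_pos; [lra|apply Rabs_pos]). lra. }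
    replace (g * (/ eps * (3 / 2 * A0))) with (/ eps * / eps * A0) in Hk by (unfold g; field; lra). exact Hk. }
  assert (PLa : forall a b, P (vadd a b) = vadd (P a) (P b)). { intros a b. unfold P. rewrite RLa by auto. vec_eq. }
  assert (PLs : forall s a, P (vscal s a) = vscal s (P a)). { intros s a. unfold P. rewrite RLs by auto. vec_eq. }
  assert (PS : forall a b, inner (P a) b = inner a (P b)).
  { intros a b. unfold P. autorewrite with vinner. rewrite RS by auto. rewrite (inner_sym a b). ring. }
  set (Cp := C + Rabs beta).
  assert (HCp : 0 <= Cp) by (unfold Cp; pose proof (Rabs_pos beta); lra).
  assert (PB : forall a, norm (P a) <= Cp * norm a).
  { intro a. unfold P, vsub. eapply Rle_trans. apply norm_triangle. rewrite norm_opp, norm_scal. pose proof (Hb a). unfold Cp. lra. }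
  set (c := Cp + g).
  assert (Hc : 0 < c) by (unfold c; lra).
  assert (Hgc : g <= c) by (unfold c; lra).
  set (Bf := fun a b => inner (P a) b).
  assert (CSB : forall a b, Bf a b * Bf a b <= Bf a a * Bf b b).
  { intros a0 b0. apply (CS_form (fun _ => True) Bf sub_True); unfold Bf.
    - intros x y z _ _ _. rewrite PLa. autorewrite with vinner. ring.
    - intros s x y _ _. rewrite PLs. autorewrite with vinner. ring.
    - intros x y _ _. rewrite PS. apply inner_sym.
    - intros x _. apply Pos.
    - exact I.
    - exact I. }
  assert (F1 : forall u, inner (P u) (P u) <= c * inner (P u) u).
  { intro u. pose proof (CSB u (P u)) as H. unfold Bf in H.
    assert (HPP : inner (P (P u)) (P u) <= c * inner (P u) (P u)).
    { eapply Rle_trans. apply inner_le. pose proof (PB (P u)). rewrite <- norm_sq.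
      pose proof (norm_nonneg (P u)). pose proof (norm_nonneg (P (P u))).
      apply Rle_trans with (Cp * norm (P u) * norm (P u)). nra. pose proof (Rmult_le_pos _ _ H3 H3). unfold c. nra. }
    pose proof (Pos (P u)) as H0. pose proof (Pos u) as H0'.
    rewrite <- norm_sq in *. set (n := norm (P u)) in *.
    destruct (Req_dec n 0) as [E|E]. rewrite E. nra.
    assert (0 < n * n) by (pose proof (norm_nonneg (P u)); nra).
    assert (n * n * (n * n) <= (c * inner (P u) u) * (n * n)) by nra.
    nra. }
  assert (F2 : forall y, g * inner (P y) (P y) <= inner (P (P y)) (P y)).
  { intro y. pose proof (CSB y (P y)) as H. unfold Bf in H.
    pose proof (Gap y). pose proof (Pos y). pose proof (Pos (P y)).
    rewrite <- norm_sq in *. set (n := norm (P y)) in *.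
    destruct (Req_dec n 0) as [E|E]. rewrite E. nra.
    assert (0 < n * n) by (pose proof (norm_nonneg (P y)); nra).
    assert (n * n * (n * n) <= (/ g * (n * n)) * inner (P (P y)) (P y)).
    { eapply Rle_trans. exact H. apply Rmult_le_compat_r. lra.
      apply (Rmult_le_reg_l g). lra. rewrite <- Rmult_assoc, Rinv_r, Rmult_1_l by lra. lra. }
    assert (n * n * (n * n) * g <= (n * n) * inner (P (P y)) (P y)).
    { replace (n * n * inner (P (P y)) (P y)) with (g * ((/ g * (n * n)) * inner (P (P y)) (P y))) by (field; lra).
      nra. }
    nra. }
  set (theta := 1 - g / c).
  assert (Hth : 0 <= theta < 1).
  { unfold theta. split. apply (Rmult_le_reg_r c). lra. unfold Rdiv. field_simplify; lra.
    assert (0 < g / c) by (apply Rdiv_lt_0_compat; lra). lra. }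
  set (f := fun u => vsub u (vscal (/ c) (P u))).
  assert (F3 : forall u, inner (P (f u)) (P (f u)) <= theta * inner (P u) (P u)).
  { intro u. unfold f.
    assert (Ef : P (vsub u (vscal (/c) (P u))) = vsub (P u) (vscal (/c) (P (P u)))).
    { unfold vsub. rewrite PLa, vopp_scal, PLs, PLs. vec_eq. }
    rewrite Ef. pose proof (F2 u) as B. set (v := P u) in *.
    pose proof (F1 v) as A.
    autorewrite with vinner. rewrite (inner_sym v (P v)).
    assert (A2 : / c * / c * inner (P v) (P v) <= / c * inner (P v) v).
    { replace (/ c * inner (P v) v) with (/ c * / c * (c * inner (P v) v)) by (field; lra).
      apply Rmult_le_compat_l. apply Rlt_le, Rmult_lt_0_compat; apply Rinv_0_lt_compat; lra. exact A. }
    assert (B2 : g * / c * inner v v <= / c * inner (P v) v).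
    { replace (g * / c * inner v v) with (/ c * (g * inner v v)) by ring.
      apply Rmult_le_compat_l. apply Rlt_le, Rinv_0_lt_compat; lra. exact B. }
    unfold theta, Rdiv. 
    replace ((1 - g * / c) * inner v v) with (inner v v - g * / c * inner v v) by ring.
    set (X1 := / c * inner (P v) v) in *. set (X2 := / c * / c * inner (P v) (P v)) in *.
    set (X3 := g * / c * inner v v) in *.
    replace (/ c * (/ c * inner (P v) (P v))) with X2 by (unfold X2; ring).
    lra. }
  set (rho := sqrt theta).
  assert (Hrho : 0 <= rho < 1).
  { unfold rho. split. apply sqrt_pos. rewrite <- sqrt_1. apply sqrt_lt_1; lra. }
  assert (Hrho2 : rho * rho = theta) by (unfold rho; apply sqrt_sqrt; lra).
  set (K0 := (1 + / (eps * c * (1 - rho))) / eps).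
  destruct (Hn K0) as [x [HXx Hx]].
  change (vsub (L x) (vscal lam x)) with (Lm L lam x) in Hx.
  set (a := Lm L lam x) in *.
  set (y0 := Lm L mu0 x).
  assert (Ry0 : Rm y0 = x) by (apply H2, HXx).
  assert (Py0 : P y0 = vscal (/ eps) a) by (rewrite HPa, Ry0; reflexivity).
  assert (Hy0 : y0 = vsub a (vscal eps x)) by (unfold y0, a, Lm, mu0; vec_eq).
  assert (HYy0 : HY phi y0) by (apply (Lm_HY D L lam phi SA EIG), HXx).
  set (s := fun j => Nat.iter j f y0).
  assert (Hs_S : forall j, s (S j) = f (s j)) by (intro j; reflexivity).
  assert (HPs : forall j, norm (P (s j)) <= rho ^ j * norm (P y0)).
  { induction j as [|j IH].
    - simpl. lra.
    - rewrite Hs_S. pose proof (F3 (s j)) as H. rewrite <- !norm_sq in H.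
      pose proof (norm_nonneg (P (f (s j)))). pose proof (norm_nonneg (P (s j))).
      pose proof (pow_le rho j ltac:(lra)). pose proof (norm_nonneg (P y0)).
      assert (Hb2 : norm (P (f (s j))) * norm (P (f (s j))) <= (rho ^ S j * norm (P y0)) * (rho ^ S j * norm (P y0))).
      { eapply Rle_trans. exact H. rewrite <- Hrho2. simpl.
        assert (0 <= rho * rho) by nra.
        assert (norm (P (s j)) * norm (P (s j)) <= (rho ^ j * norm (P y0)) * (rho ^ j * norm (P y0))) by (apply Rmult_le_compat; lra).
        replace (rho * rho ^ j * norm (P y0) * (rho * rho ^ j * norm (P y0))) with ((rho * rho) * ((rho ^ j * norm (P y0)) * (rho ^ j * norm (P y0)))) by ring.
        apply Rmult_le_compat_l; lra. }
      assert (0 <= rho ^ S j * norm (P y0)) by (apply Rmult_le_pos; [apply pow_le; lra|lra]).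
      nra. }
  assert (Hstep : forall j, norm (vsub (s (S j)) (s j)) <= (norm (P y0) / c) * rho ^ j).
  { intro j. rewrite Hs_S. unfold f.
    replace (vsub (vsub (s j) (vscal (/ c) (P (s j)))) (s j)) with (vscal (- / c) (P (s j))) by vec_eq.
    rewrite norm_scal, Rabs_Ropp, Rabs_pos_eq by (apply Rlt_le, Rinv_0_lt_compat; lra).
    pose proof (HPs j). unfold Rdiv.
    replace (norm (P y0) * / c * rho ^ j) with (/ c * (rho ^ j * norm (P y0))) by ring.
    apply Rmult_le_compat_l. apply Rlt_le, Rinv_0_lt_compat; lra. exact H. }
  destruct (GEO s (norm (P y0) / c) rho Hrho Hstep) as [l Hl].
  pose proof (geo_close l s _ _ Hrho Hl) as Hlc.
  assert (HYs : forall j, HY phi (s j)).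
  { induction j as [|j IH]. exact HYy0. rewrite Hs_S. unfold f. unfold HY in *.
    rewrite inner_sub_l, inner_scal_l. unfold P. rewrite inner_sub_l, inner_scal_l, IH.
    rewrite (res_HY D L lam phi SA EIG mu0 Rm C HR Hmu0 (s j) IH). ring. }
  assert (HYl : HY phi l).
  { apply (HY_closed phi l s HYs). intros e He. destruct (Hlc e He) as [N HN]. exists N. apply HN. lia. }
  assert (HPl : P l = vzero).
  { apply norm_eq0. apply small_zero. apply norm_nonneg. intros e He.
    destruct (Hlc (e / (2 * (Cp + 1)))) as [N1 HN1]. apply Rdiv_lt_0_compat; lra.
    destruct (pow_small rho (e / (2 * (norm (P y0) + 1))) Hrho) as [N2 HN2].
    apply Rdiv_lt_0_compat. lra. pose proof (norm_nonneg (P y0)); lra.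
    set (j := max N1 N2).
    assert (E : P l = vadd (P (vsub l (s j))) (P (s j))).
    { rewrite <- PLa. f_equal. vec_eq. }
    rewrite E. eapply Rle_lt_trans. apply norm_triangle.
    pose proof (PB (vsub l (s j))). pose proof (HN1 j (Nat.le_max_l _ _)). pose proof (HN2 j (Nat.le_max_r _ _)).
    pose proof (HPs j). pose proof (norm_nonneg (P y0)). pose proof (norm_nonneg (vsub l (s j))).
    assert (A0 : Cp * norm (vsub l (s j)) <= Cp * (e / (2 * (Cp + 1)))) by (apply Rmult_le_compat_l; lra).
    assert (A1 : Cp * norm (vsub l (s j)) < (Cp + 1) * (e / (2 * (Cp + 1)))).
    { assert (0 < e / (2 * (Cp + 1))) by (apply Rdiv_lt_0_compat; lra). lra. }
    replace ((Cp + 1) * (e / (2 * (Cp + 1)))) with (e / 2) in A1 by (field; lra).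
    assert (A2 : rho ^ j * norm (P y0) <= (e / (2 * (norm (P y0) + 1))) * (norm (P y0) + 1)).
    { apply Rmult_le_compat; try lra. apply pow_le; lra. }
    replace ((e / (2 * (norm (P y0) + 1))) * (norm (P y0) + 1)) with (e / 2) in A2 by (field; lra).
    lra. }
  assert (Hl0 : norm (vsub l y0) <= norm a / (eps * c * (1 - rho))).
  { pose proof (Hl 0%nat) as H. simpl in H. change (Nat.iter 0 f y0) with y0 in H.
    rewrite Py0, norm_scal, Rabs_pos_eq in H by (apply Rlt_le, Rinv_0_lt_compat; lra).
    replace (/ eps * norm a / c * 1 / (1 - rho)) with (norm a / (eps * c * (1 - rho))) in H by (field; lra).
    exact H. }
  assert (Hny0 : eps * norm x - norm a <= norm y0).
  { rewrite Hy0. pose proof (norm_sub_rev (vscal eps x) a) as H. rewrite norm_scal, (Rabs_pos_eq eps) in H by lra.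
    rewrite norm_sub_sym in H. pose proof (Rle_abs (eps * norm x - norm a)). lra. }
  assert (Hnl : 0 < norm l).
  { pose proof (norm_sub_rev y0 l) as H. rewrite norm_sub_sym in H.
    pose proof (Rle_abs (norm y0 - norm l)).
    assert (HK : K0 * norm a = (norm a + norm a / (eps * c * (1 - rho))) / eps).
    { unfold K0. field. split; [lra|]. split; [lra|]. lra. }
    assert (H4 : eps * (K0 * norm a) < eps * norm x) by (apply Rmult_lt_compat_l; lra).
    replace (eps * (K0 * norm a)) with (norm a + norm a / (eps * c * (1 - rho))) in H4 by (rewrite HK; field; lra).
    lra. }
  set (w := Rm l).
  assert (Hw1 : w = vscal beta l).
  { apply veq_of_inner. replace (vsub w (vscal beta l)) with (P l) by reflexivity. rewrite HPl. apply inner_0_l. }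
  assert (Dw : D w) by apply H1.
  assert (Lw : L w = vscal lam w).
  { assert (E1 : L w = vadd (Lm L mu0 w) (vscal mu0 w)) by (unfold Lm; vec_eq).
    rewrite E1. unfold w. rewrite (proj2 (H1 l)). fold w. rewrite Hw1. unfold beta, mu0. vec_eqf. lra. }
  destruct EIG as [_ [_ [_ [Hsimp _]]]].
  destruct (Hsimp w Dw Lw) as [k Hk].
  assert (HYw : HY phi w) by (apply (res_HY D L lam phi SA EIG mu0 Rm C HR Hmu0), HYl).
  unfold HY in HYw. rewrite Hk, inner_scal_l, (phi1 D L lam phi EIG) in HYw.
  assert (Hk0 : k = 0) by lra. rewrite Hk0, vscal_0 in Hk.
  assert (El : l = vscal (/ beta) w) by (rewrite Hw1; unfold beta; vec_eqf; lra).
  rewrite El, Hk, norm_scal, norm_zero in Hnl. lra.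
Qed.
End Iso2.

Section Banach.
Context {Y : RHilbert}.
Implicit Types (x y : Y).

Lemma sub_HY (phi : Y) : subspace (HY phi).
Proof.
  unfold HY. split. apply inner_0_l. split.
  intros x y Hx Hy. rewrite inner_add_l, Hx, Hy; ring.
  intros a x Hx. rewrite inner_scal_l, Hx; ring.
Qed.

Lemma sub_HX (D : Y -> Prop) (phi : Y) : subspace D -> subspace (HX D phi).
Proof.
  intros [H0 [Ha Hs]]. pose proof (sub_HY phi) as [G0 [Ga Gs]]. unfold HX.
  split. auto. split. intros x y [] []; auto. intros a x []; auto.
Qed.

Lemma nbb_mono S S' T b : (forall x, S x -> S' x) -> nbb S T b -> nbb S' T b.
Proof. intros H Hn C. destruct (Hn C) as [x [Sx Hx]]. exists x. auto. Qed.

Lemma not_nbb S T b : ~ nbb S T b -> exists C, 0 <= C /\ forall x, S x -> norm x <= C * norm (vsub (T x) (vscal b x)).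
Proof.
  intro H. apply NNPP. intro H2. apply H. intro C. apply NNPP. intro H3. apply H2.
  exists (Rmax C 0). split. apply Rmax_r. intros x Sx. apply Rnot_lt_le. intro H4. apply H3. exists x. split; auto.
  eapply Rle_lt_trans; [|exact H4]. apply Rmult_le_compat_r. apply norm_nonneg. apply Rmax_l.
Qed.

Lemma BANACH (phi : Y) (F : Y -> Y) (k : R) : 0 <= k < 1 ->
  (forall a, HY phi a -> HY phi (F a)) ->
  (forall a b, HY phi a -> HY phi b -> norm (vsub (F a) (F b)) <= k * norm (vsub a b)) ->
  exists w, HY phi w /\ F w = w.
Proof.
  intros Hk HF HL.
  set (s := fun j => Nat.iter j F vzero).
  assert (Hs_S : forall j, s (S j) = F (s j)) by (intro j; reflexivity).
  assert (HYs : forall j, HY phi (s j)).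
  { induction j. apply (sub_zero _ (sub_HY phi)). rewrite Hs_S. apply HF, IHj. }
  assert (Hst : forall j, norm (vsub (s (S j)) (s j)) <= norm (vsub (s 1%nat) (s 0%nat)) * k ^ j).
  { induction j. simpl. lra.
    replace (vsub (s (S (S j))) (s (S j))) with (vsub (F (s (S j))) (F (s j))) by reflexivity.
    eapply Rle_trans. apply HL; apply HYs.
    change (k ^ S j) with (k * k ^ j). pose proof (norm_nonneg (vsub (s 1%nat) (s 0%nat))). pose proof (pow_le k j ltac:(lra)).
    assert (k * norm (vsub (s (S j)) (s j)) <= k * (norm (vsub (s 1%nat) (s 0%nat)) * k ^ j)) by (apply Rmult_le_compat_l; lra).
    replace (norm (vsub (s 1%nat) (s 0%nat)) * (k * k ^ j)) with (k * (norm (vsub (s 1%nat) (s 0%nat)) * k ^ j)) by ring.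
    exact H1. }
  destruct (GEO s _ k Hk Hst) as [l Hl]. pose proof (geo_close l s _ _ Hk Hl) as Hc.
  assert (HYl : HY phi l).
  { apply (HY_closed phi l s HYs). intros e He. destruct (Hc e He) as [N HN]. exists N. apply HN. lia. }
  exists l. split; [exact HYl|]. apply veq_of_inner. rewrite <- norm_sq.
  assert (norm (vsub (F l) l) = 0).
  { apply small_zero. apply norm_nonneg. intros e He. destruct (Hc (e / 2) ltac:(lra)) as [N HN].
    eapply Rle_lt_trans. apply (norm_sub_tri _ (F (s N))).
    pose proof (HL l (s N) HYl (HYs N)) as A.
    pose proof (HN N (le_n N)) as B. pose proof (HN (S N) (le_S _ _ (le_n N))) as C.
    replace (F (s N)) with (s (S N)) by reflexivity. rewrite (norm_sub_sym (s (S N)) l).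
    pose proof (norm_nonneg (vsub l (s N))).
    assert (k * norm (vsub l (s N)) <= 1 * norm (vsub l (s N))) by (apply Rmult_le_compat_r; lra).
    change (s (S N)) with (F (s N)) in C. change (s (S N)) with (F (s N)). lra. }
  rewrite H; ring.
Qed.

End Banach.

Section Ginv.
Context {Y : RHilbert}.
Implicit Types (x y : Y) (S : Y -> Prop) (T : Y -> Y).
Context (D : Y -> Prop) (L : Y -> Y) (lam : R) (phi : Y).
Hypothesis SA : self_adjoint D L.
Hypothesis EIG : simple_isolated_eigenvalue D L lam phi.

Lemma surj_A C0 : 0 <= C0 -> (forall x, HX D phi x -> norm x <= C0 * norm (L x)) ->
  forall y, HY phi y -> exists w, HX D phi w /\ L w = y.
Proof.
  intros HC0 Hbb y Hy.
  destruct (iso_res D L lam phi EIG) as [d [Hd Hres]].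
  set (mu0 := lam + d / 2).
  destruct (resolv_of D L mu0 (Hres mu0 ltac:(unfold mu0; replace (lam + d/2 - lam) with (d/2) by ring;
       rewrite Rabs_pos_eq; lra))) as [Rm [C HR]].
  pose proof HR as [H1 [H2 [HC Hb]]].
  assert (Hmu0 : mu0 <> lam) by (unfold mu0; lra).
  pose proof (resolv_lin D L SA _ _ _ HR) as [RLa RLs].
  pose proof (resolv_sym D L SA _ _ _ HR) as RS.
  pose proof (res_HY D L lam phi SA EIG mu0 Rm C HR Hmu0) as RH.
  set (Bop := fun v => vadd v (vscal mu0 (Rm v))).
  assert (LB : forall v, L (Rm v) = Bop v).
  { intro v. unfold Bop. pose proof (proj2 (H1 v)) as E. unfold Lm in E.
    transitivity (vadd (vsub (L (Rm v)) (vscal mu0 (Rm v))) (vscal mu0 (Rm v))). vec_eq. rewrite E. reflexivity. }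
  assert (BH : forall v, HY phi v -> HY phi (Bop v)).
  { intros v Hv. unfold Bop. apply sub_add. apply sub_HY. exact Hv. apply sub_scal. apply sub_HY. apply RH, Hv. }
  set (b := / (1 + Rabs mu0 * C0)).
  assert (Hb0 : 0 < b) by (unfold b; apply Rinv_0_lt_compat; pose proof (Rabs_pos mu0); nra).
  assert (Hb1 : b <= 1).
  { unfold b. rewrite <- Rinv_1. apply Rinv_le_contravar. lra. pose proof (Rabs_pos mu0). nra. }
  assert (Blow : forall v, HY phi v -> b * norm v <= norm (Bop v)).
  { intros v Hv. assert (HXv : HX D phi (Rm v)) by (split; [apply H1|apply RH, Hv]).
    pose proof (Hbb _ HXv) as H. rewrite LB in H.
    assert (Ev : v = vsub (Bop v) (vscal mu0 (Rm v))) by (unfold Bop; vec_eq).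
    assert (Hv2 : norm v <= norm (Bop v) + Rabs mu0 * norm (Rm v)).
    { rewrite Ev at 1. unfold vsub. eapply Rle_trans. apply norm_triangle. rewrite norm_opp, norm_scal. lra. }
    assert (Hv3 : norm v <= (1 + Rabs mu0 * C0) * norm (Bop v)).
    { pose proof (Rabs_pos mu0). assert (Rabs mu0 * norm (Rm v) <= Rabs mu0 * (C0 * norm (Bop v))) by (apply Rmult_le_compat_l; lra). nra. }
    unfold b. apply (Rmult_le_reg_l (1 + Rabs mu0 * C0)). pose proof (Rabs_pos mu0); nra.
    rewrite <- Rmult_assoc, Rinv_r, Rmult_1_l. exact Hv3. pose proof (Rabs_pos mu0); nra. }
  set (K := 1 + Rabs mu0 * C).
  assert (HK : 1 <= K) by (unfold K; pose proof (Rabs_pos mu0); nra).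
  assert (Bup : forall v, norm (Bop v) <= K * norm v).
  { intro v. unfold Bop. eapply Rle_trans. apply norm_triangle. rewrite norm_scal. pose proof (Hb v).
    pose proof (Rabs_pos mu0). assert (Rabs mu0 * norm (Rm v) <= Rabs mu0 * (C * norm v)) by (apply Rmult_le_compat_l; lra).
    unfold K. lra. }
  assert (BS : forall u v, inner (Bop u) v = inner u (Bop v)).
  { intros u v. unfold Bop. autorewrite with vinner. rewrite RS by auto. rewrite (inner_sym u v). ring. }
  assert (BLa : forall u v, Bop (vadd u v) = vadd (Bop u) (Bop v)). { intros. unfold Bop. rewrite RLa by auto. vec_eq. }
  assert (BLs : forall s u, Bop (vscal s u) = vscal s (Bop u)). { intros. unfold Bop. rewrite RLs by auto. vec_eq. }
  set (Sop := fun h => vsub h (vscal (/ (K * K)) (Bop (Bop h)))).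
  set (q := 1 - b * b / (K * K)).
  assert (Hq : 0 <= q < 1).
  { unfold q. assert (0 < b * b / (K * K)) by (apply Rdiv_lt_0_compat; nra).
    assert (b * b / (K * K) <= 1). { apply (Rmult_le_reg_r (K*K)). nra. unfold Rdiv. rewrite Rmult_assoc, Rinv_l by nra. nra. }
    lra. }
  assert (SLa : linear_on (HY phi) Sop).
  { split; intros; unfold Sop; rewrite ?BLa, ?BLs; vec_eq. }
  assert (SS : symm_on (HY phi) Sop).
  { intros u v _ _. unfold Sop. autorewrite with vinner. rewrite (BS (Bop u) v), (BS u (Bop v)). ring. }
  assert (SM : maps (HY phi) Sop).
  { intros u Hu. unfold Sop. apply sub_sub. apply sub_HY. exact Hu. apply sub_scal. apply sub_HY. apply BH, BH, Hu. }
  assert (SF : forall h, HY phi h -> Rabs (inner (Sop h) h) <= q * (norm h * norm h)).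
  { intros h Hh. unfold Sop. autorewrite with vinner. rewrite (BS (Bop h) h). rewrite <- !norm_sq.
    pose proof (Blow h Hh). pose proof (Bup h). pose proof (norm_nonneg h). pose proof (norm_nonneg (Bop h)).
    assert (E1 : b * norm h * (b * norm h) <= norm (Bop h) * norm (Bop h)) by (apply Rmult_le_compat; nra).
    assert (E2 : norm (Bop h) * norm (Bop h) <= K * norm h * (K * norm h)) by (apply Rmult_le_compat; nra).
    assert (0 < / (K * K)) by (apply Rinv_0_lt_compat; nra).
    assert (E3 : / (K * K) * (norm (Bop h) * norm (Bop h)) <= norm h * norm h).
    { apply (Rmult_le_reg_l (K * K)). nra. rewrite <- Rmult_assoc, Rinv_r, Rmult_1_l by nra. nra. }
    assert (E4 : / (K * K) * (b * norm h * (b * norm h)) <= / (K * K) * (norm (Bop h) * norm (Bop h))) by (apply Rmult_le_compat_l; lra).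
    rewrite Rabs_pos_eq. unfold q. unfold Rdiv.
    replace (/ (K * K) * (b * norm h * (b * norm h))) with (b * b * / (K * K) * (norm h * norm h)) in E4 by ring.
    lra. lra. }
  pose proof (POLAR (HY phi) Sop q (sub_HY phi) SLa SS SM ltac:(lra) SF) as SB.
  set (Phi := fun u => vadd (Sop u) (vscal (/ (K * K)) y)).
  destruct (BANACH phi Phi q Hq) as [u [Hu Hfix]].
  - intros a Ha. unfold Phi. apply sub_add. apply sub_HY. apply SM, Ha. apply sub_scal. apply sub_HY. exact Hy.
  - intros a a' Ha Ha'. unfold Phi.
    replace (vsub (vadd (Sop a) (vscal (/ (K * K)) y)) (vadd (Sop a') (vscal (/ (K * K)) y))) with (Sop (vsub a a')).
    apply SB. apply sub_sub. apply sub_HY. exact Ha. exact Ha'.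
    rewrite (lin_sub (HY phi) Sop) by (auto; apply sub_HY). vec_eq.
  - exists (Rm (Bop u)). split. split. apply H1. apply RH, BH, Hu.
    rewrite LB.
    assert (E : Bop (Bop u) = vadd (vscal (K * K) (vsub u (Phi u))) y).
    { unfold Phi, Sop. vec_eqf. nra. }
    rewrite E, Hfix. vec_eq.
Qed.

End Ginv.

Section Ginv2.
Context {Y : RHilbert}.
Implicit Types (x y : Y) (S : Y -> Prop) (T : Y -> Y).
Context (D : Y -> Prop) (L : Y -> Y) (lam : R) (phi : Y).
Hypothesis SA : self_adjoint D L.
Hypothesis EIG : simple_isolated_eigenvalue D L lam phi.

Lemma GINV (n : R) : 0 <= n -> (forall mu, -n <= mu <= n -> (spectrum D L mu <-> mu = lam)) ->
  exists G q, 0 <= q /\ n * q < 1 /\ (forall y, HY phi y -> HX D phi (G y) /\ L (G y) = y) /\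
    (forall y, HY phi y -> norm (G y) <= q * norm y) /\ linear_on (HY phi) G /\
    (forall x, HX D phi x -> G (L x) = x).
Proof.
  intros Hn Hspec.
  assert (HXD : forall x, HX D phi x -> D x) by (intros x []; auto).
  assert (NB0 : ~ nbb (HX D phi) L 0).
  { destruct (Req_dec lam 0) as [E|E].
    - rewrite <- E. apply (ISO D L lam phi SA EIG).
    - intro H. assert (Hr : in_resolvent D L 0).
      { apply NNPP. intro H2. apply E. symmetry. apply (Hspec 0 ltac:(lra)). exact H2. }
      apply (res_not_nbb D L 0 Hr). apply (nbb_mono _ _ _ _ HXD H). }
  destruct (not_nbb _ _ _ NB0) as [C0 [HC0 Hbb]].
  assert (Hbb' : forall x, HX D phi x -> norm x <= C0 * norm (L x)).
  { intros x Hx. replace (L x) with (vsub (L x) (vscal 0 x)) by vec_eq. apply Hbb, Hx. }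
  pose proof (surj_A D L lam phi SA EIG C0 HC0 Hbb') as Hsurj.
  assert (Hch : forall y, exists w, HY phi y -> HX D phi w /\ L w = y).
  { intro y. destruct (classic (HY phi y)) as [Hy|Hy]. destruct (Hsurj y Hy) as [w Hw]. exists w; auto.
    exists vzero. intro; contradiction. }
  apply choice_fun in Hch. destruct Hch as [G HG].
  pose proof (sub_HX D phi (SA_sub D L SA)) as SHX.
  assert (Linj : forall w1 w2, HX D phi w1 -> HX D phi w2 -> L w1 = L w2 -> w1 = w2).
  { intros w1 w2 H1 H2 E. apply veq_of_inner. rewrite <- norm_sq.
    pose proof (Hbb' (vsub w1 w2) (sub_sub _ _ _ SHX H1 H2)) as H.
    rewrite (lin_sub D L w1 w2 (SA_sub D L SA) (SA_lin D L SA)) in H by (apply HXD; auto).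
    rewrite E in H. replace (vsub (L w2) (L w2)) with (@vzero Y) in H by vec_eq. rewrite norm_zero in H.
    pose proof (norm_nonneg (vsub w1 w2)). assert (norm (vsub w1 w2) = 0) by lra. rewrite H3; ring. }
  assert (GL : forall x, HX D phi x -> G (L x) = x).
  { intros x Hx. apply Linj. apply HG, (L_HY D L lam phi SA EIG), Hx. exact Hx.
    apply HG, (L_HY D L lam phi SA EIG), Hx. }
  assert (GLin : linear_on (HY phi) G).
  { split.
    - intros a b Ha Hb. apply Linj. apply HG. apply sub_add; auto. apply sub_HY.
      apply sub_add; auto. apply HG; auto. apply HG; auto.
      rewrite (proj1 (SA_lin D L SA)) by (apply HXD, HG; auto).
      rewrite (proj2 (HG a Ha)), (proj2 (HG b Hb)). apply HG. apply sub_add; auto. apply sub_HY.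
    - intros s a Ha. apply Linj. apply HG. apply sub_scal; auto. apply sub_HY.
      apply sub_scal; auto. apply HG; auto.
      rewrite (proj2 (SA_lin D L SA)) by (apply HXD, HG; auto).
      rewrite (proj2 (HG a Ha)). apply HG. apply sub_scal; auto. apply sub_HY. }
  assert (GS : symm_on (HY phi) G).
  { intros a b Ha Hb. rewrite <- (proj2 (HG b Hb)) at 1. rewrite <- (SA_sym D L SA) by (apply HXD, HG; auto).
    rewrite (proj2 (HG a Ha)). reflexivity. }
  assert (GM : maps (HY phi) G) by (intros a Ha; apply HG, Ha).
  assert (GB : bdd_on (HY phi) G C0).
  { intros a Ha. pose proof (Hbb' (G a) (proj1 (HG a Ha))). rewrite (proj2 (HG a Ha)) in H. exact H. }
  destruct (RAY (HY phi) G C0 (sub_HY phi) GLin GS GM HC0 GB) as [q [Hq [Hform Hcase]]].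
  assert (Hnq : n * q < 1).
  { assert (Hg : forall b, 0 < Rabs b -> nbb (HY phi) G b -> n * Rabs b < 1).
    { intros b Hb Hnb. apply Rnot_le_lt. intro Hle.
      assert (Hb0 : b <> 0) by (intro E; rewrite E, Rabs_R0 in Hb; lra).
      pose proof (TRANS L (HY phi) G (HX D phi) 0 b Hb0) as T1.
      assert (T2 : nbb (HX D phi) L (0 + / b)).
      { apply T1; [|exact Hnb]. intros y Hy. split. apply HG, Hy. unfold Lm. rewrite (proj2 (HG y Hy)). vec_eq. }
      assert (Hmu : -n <= 0 + / b <= n).
      { rewrite Rplus_0_l. assert (HA : Rabs (/ b) <= n).
        { rewrite Rabs_inv. apply (Rmult_le_reg_l (Rabs b)). exact Hb. rewrite Rinv_r by lra. lra. }
        pose proof (Rle_abs (/ b)). pose proof (Rle_abs (- / b)). rewrite Rabs_Ropp in H0. lra. }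
      assert (Hsp : spectrum D L (0 + / b)).
      { intro Hr. apply (res_not_nbb D L _ Hr). apply (nbb_mono _ _ _ _ HXD T2). }
      apply (proj1 (Hspec _ Hmu)) in Hsp. rewrite Hsp in T2. apply (ISO D L lam phi SA EIG T2). }
    destruct Hcase as [->|[Hc|Hc]]. lra.
    - destruct (Req_dec q 0) as [->|Hq0]. lra. pose proof (Hg q ltac:(rewrite Rabs_pos_eq; lra) Hc). rewrite Rabs_pos_eq in H; lra.
    - destruct (Req_dec q 0) as [->|Hq0]. lra. pose proof (Hg (-q) ltac:(rewrite Rabs_Ropp, Rabs_pos_eq; lra) Hc).
      rewrite Rabs_Ropp, Rabs_pos_eq in H; lra. }
  exists G, q. split; [exact Hq|]. split; [exact Hnq|]. split; [exact HG|]. split.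
  - intros y Hy. apply (POLAR (HY phi) G q (sub_HY phi) GLin GS GM Hq Hform y Hy).
  - split; [exact GLin|exact GL].
Qed.

End Ginv2.

Lemma sqrt_sum_le (x y : R) : 0 <= x -> 0 <= y -> sqrt (x * x + y * y) <= x + y.
Proof.
  intros Hx Hy. rewrite <- (sqrt_square (x + y)) by lra. apply sqrt_le_1_alt. nra.
Qed.

Lemma minkowski2 (x y p1 q1 p2 q2 : R) : 0 <= x -> 0 <= y -> 0 <= p1 -> 0 <= q1 -> 0 <= p2 -> 0 <= q2 ->
  x <= p1 + p2 -> y <= q1 + q2 ->
  sqrt (x ^ 2 + y ^ 2) <= sqrt (p1 ^ 2 + q1 ^ 2) + sqrt (p2 ^ 2 + q2 ^ 2).
Proof.
  intros. set (A := sqrt (p1 ^ 2 + q1 ^ 2)). set (B := sqrt (p2 ^ 2 + q2 ^ 2)).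
  assert (HA : A * A = p1 ^ 2 + q1 ^ 2) by (unfold A; apply sqrt_sqrt; nra).
  assert (HB : B * B = p2 ^ 2 + q2 ^ 2) by (unfold B; apply sqrt_sqrt; nra).
  assert (A0 : 0 <= A) by apply sqrt_pos. assert (B0 : 0 <= B) by apply sqrt_pos.
  rewrite <- (sqrt_square (A + B)) by lra. apply sqrt_le_1_alt.
  assert (HAB : p1 * p2 + q1 * q2 <= A * B).
  { assert ((p1 * p2 + q1 * q2) * (p1 * p2 + q1 * q2) <= (A * B) * (A * B)).
    { replace ((A * B) * (A * B)) with ((A*A) * (B*B)) by ring. rewrite HA, HB.
      assert (E : (p1 ^ 2 + q1 ^ 2) * (p2 ^ 2 + q2 ^ 2) - (p1 * p2 + q1 * q2) * (p1 * p2 + q1 * q2) = (p1 * q2 - q1 * p2) ^ 2) by ring.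
      pose proof (pow2_ge_0 (p1 * q2 - q1 * p2)). lra. }
    assert (0 <= A * B) by nra. nra. }
  nra.
Qed.

Section Main1.
Context {Y : RHilbert}.
Implicit Types (x y : Y).

Lemma distY_pm : pmetric (@distY Y).
Proof.
  unfold distY. split. intro a. replace (vsub a a) with (@vzero Y) by vec_eq. apply norm_zero.
  split. intros; apply norm_sub_sym. intros; apply norm_sub_tri.
Qed.

Lemma graph_dist_pm (L : Y -> Y) : pmetric (graph_dist L).
Proof.
  unfold graph_dist. split. intro a. replace (vsub a a) with (@vzero Y) by vec_eq.
  replace (vsub (L a) (L a)) with (@vzero Y) by vec_eq. rewrite norm_zero. replace (0 ^ 2 + 0 ^ 2) with 0 by ring. apply sqrt_0.
  split. intros. rewrite (norm_sub_sym a b), (norm_sub_sym (L a) (L b)). reflexivity.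
  intros a b c. apply minkowski2; try apply norm_nonneg; apply norm_sub_tri.
Qed.

Lemma graph_dist_le (L : Y -> Y) a b : graph_dist L a b <= norm (vsub a b) + norm (vsub (L a) (L b)).
Proof. unfold graph_dist. rewrite !pow2_sqr || idtac. replace (norm (vsub a b) ^ 2) with (norm (vsub a b) * norm (vsub a b)) by ring.
  replace (norm (vsub (L a) (L b)) ^ 2) with (norm (vsub (L a) (L b)) * norm (vsub (L a) (L b))) by ring.
  apply sqrt_sum_le; apply norm_nonneg. Qed.

Lemma norm_le_graph (L : Y -> Y) a b : norm (vsub a b) <= graph_dist L a b.
Proof.
  unfold graph_dist. rewrite <- (sqrt_square (norm (vsub a b))) at 1 by apply norm_nonneg. apply sqrt_le_1_alt.
  pose proof (pow2_ge_0 (norm (vsub (L a) (L b)))). nra.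
Qed.
Lemma normL_le_graph (L : Y -> Y) a b : norm (vsub (L a) (L b)) <= graph_dist L a b.
Proof.
  unfold graph_dist. rewrite <- (sqrt_square (norm (vsub (L a) (L b)))) at 1 by apply norm_nonneg. apply sqrt_le_1_alt.
  pose proof (pow2_ge_0 (norm (vsub a b))). nra.
Qed.

Context (phi : Y).
Hypothesis Hphi : inner phi phi = 1.

Lemma Pr_HY y : HY phi (Pr phi y).
Proof. unfold HY, Pr. autorewrite with vinner. rewrite Hphi. ring. Qed.
Lemma Pr_id y : HY phi y -> Pr phi y = y.
Proof. intro H. unfold Pr. unfold HY in H. rewrite H. vec_eq. Qed.
Lemma Pr_sub a b : Pr phi (vsub a b) = vsub (Pr phi a) (Pr phi b).
Proof. unfold Pr. rewrite inner_sub_l. vec_eq. Qed.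
Lemma Pr_add a b : Pr phi (vadd a b) = vadd (Pr phi a) (Pr phi b).
Proof. unfold Pr. rewrite inner_add_l. vec_eq. Qed.
Lemma Pr_scal s a : Pr phi (vscal s a) = vscal s (Pr phi a).
Proof. unfold Pr. rewrite inner_scal_l. vec_eq. Qed.
Lemma Pr_phi : Pr phi phi = vzero.
Proof. unfold Pr. rewrite Hphi. vec_eq. Qed.
Lemma Pr_decomp y : y = vadd (Pr phi y) (vscal (inner y phi) phi).
Proof. unfold Pr. vec_eq. Qed.
Lemma Pr_norm y : norm (Pr phi y) <= norm y.
Proof.
  apply Rsqr_incr_0_var; [|apply norm_nonneg]. unfold Rsqr. rewrite !norm_sq. unfold Pr.
  autorewrite with vinner. rewrite Hphi, (inner_sym phi y). pose proof (Rle_0_sqr (inner y phi)). unfold Rsqr in H. nra.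
Qed.
Lemma inner_phi_le y : Rabs (inner y phi) <= norm y.
Proof. eapply Rle_trans. apply CS. assert (norm phi = 1) by (unfold norm; rewrite Hphi; apply sqrt_1). rewrite H; lra. Qed.

End Main1.

Section Fib.
Context {Y : RHilbert}.
Implicit Types (x y : Y).
Context (D : Y -> Prop) (L N : Y -> Y) (lam : R) (phi : Y) (n q : R) (G : Y -> Y).
Hypothesis SA : self_adjoint D L.
Hypothesis EIG : simple_isolated_eigenvalue D L lam phi.
Hypothesis FC : F_continuous D L N.
Hypothesis Hn : 0 <= n.
Hypothesis Lip : forall t w1 w2, HY phi w1 -> HY phi w2 ->
       norm (vsub (Pr phi (N (vadd w1 (vscal t phi)))) (Pr phi (N (vadd w2 (vscal t phi))))) <= n * norm (vsub w1 w2).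
Hypothesis Hq : 0 <= q.
Hypothesis Hnq : n * q < 1.
Hypothesis HG : forall y, HY phi y -> HX D phi (G y) /\ L (G y) = y.
Hypothesis HGb : forall y, HY phi y -> norm (G y) <= q * norm y.
Hypothesis GLin : linear_on (HY phi) G.
Hypothesis GL : forall x, HX D phi x -> G (L x) = x.

Definition PN t w := Pr phi (N (vadd w (vscal t phi))).

Let Hphi := phi1 D L lam phi EIG.
Let HDphi := Dphi D L lam phi EIG.

Lemma Lwt w t : D w -> L (vadd w (vscal t phi)) = vadd (L w) (vscal (t * lam) phi).
Proof.
  intro Dw. rewrite (proj1 (SA_lin D L SA)) by (first [exact Dw | apply sub_scal; [apply (SA_sub D L SA)|exact HDphi]]).
  rewrite (proj2 (SA_lin D L SA)) by exact HDphi. rewrite (Lphi D L lam phi EIG). vec_eq.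
Qed.

Lemma PrF w t : HX D phi w -> Pr phi (Fmap L N (vadd w (vscal t phi))) = vsub (L w) (PN t w).
Proof.
  intro Hw. unfold Fmap, PN. rewrite (Pr_sub phi). rewrite Lwt by apply Hw.
  rewrite (Pr_add phi), (Pr_scal phi), (Pr_phi phi Hphi). rewrite (Pr_id phi (L w)) by (apply (L_HY D L lam phi SA EIG), Hw).
  vec_eq.
Qed.

Lemma isu_iff z t u : is_u D L N phi z t u <-> exists w, HX D phi w /\ L w = vadd z (PN t w) /\ u = vadd w (vscal t phi).
Proof.
  split.
  - intros [w [Hw [Hz Hu]]]. exists w. split; [exact Hw|]. split; [|exact Hu].
    rewrite PrF in Hz by exact Hw. rewrite <- Hz. vec_eq.
  - intros [w [Hw [Hz Hu]]]. exists w. split; [exact Hw|]. split; [|exact Hu].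
    rewrite PrF by exact Hw. rewrite Hz. vec_eq.
Qed.

Lemma PN_HY t w : HY phi (PN t w).
Proof. apply (Pr_HY phi Hphi). Qed.

Lemma exist_w z t : HY phi z -> exists w, HX D phi w /\ L w = vadd z (PN t w).
Proof.
  intro Hz.
  set (Phi := fun w => G (vadd z (PN t w))).
  assert (HzP : forall w, HY phi (vadd z (PN t w))) by (intro w; apply sub_add; [apply sub_HY|exact Hz|apply PN_HY]).
  destruct (BANACH phi Phi (q * n)) as [w [Hw Hfix]].
  - split. apply Rmult_le_pos; lra. lra.
  - intros a _. apply HG, HzP.
  - intros a b Ha Hb. unfold Phi. rewrite <- (lin_sub (HY phi) G) by (auto; apply sub_HY).
    eapply Rle_trans. apply HGb. apply sub_sub. apply sub_HY. apply HzP. apply HzP.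
    replace (vsub (vadd z (PN t a)) (vadd z (PN t b))) with (vsub (PN t a) (PN t b)) by vec_eq.
    rewrite Rmult_assoc. apply Rmult_le_compat_l. exact Hq. apply Lip; auto.
  - exists w. assert (HXw : HX D phi w) by (rewrite <- Hfix; apply HG, HzP). split; [exact HXw|].
    rewrite <- Hfix at 1. apply HG, HzP.
Qed.

Lemma stab w1 w2 z1 z2 t1 t2 : HX D phi w1 -> HX D phi w2 -> HY phi z1 -> HY phi z2 ->
  L w1 = vadd z1 (PN t1 w1) -> L w2 = vadd z2 (PN t2 w2) ->
  norm (vsub (L w1) (L w2)) <= (norm (vsub z1 z2) + norm (vsub (PN t1 w2) (PN t2 w2))) / (1 - n * q) /\
  norm (vsub w1 w2) <= q * norm (vsub (L w1) (L w2)).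
Proof.
  intros H1 H2 Hz1 Hz2 E1 E2.
  assert (HLs : L (vsub w1 w2) = vsub (L w1) (L w2)) by (apply (lin_sub D L w1 w2 (SA_sub D L SA) (SA_lin D L SA)); apply H1 || apply H2).
  assert (Hw : vsub w1 w2 = G (vsub (L w1) (L w2))).
  { rewrite <- HLs. symmetry. apply GL. apply sub_sub. apply (sub_HX D phi (SA_sub D L SA)). exact H1. exact H2. }
  assert (Hb2 : norm (vsub w1 w2) <= q * norm (vsub (L w1) (L w2))).
  { rewrite Hw. apply HGb. apply sub_sub. apply sub_HY. apply (L_HY D L lam phi SA EIG), H1. apply (L_HY D L lam phi SA EIG), H2. }
  split; [|exact Hb2].
  assert (E : vsub (L w1) (L w2) = vadd (vadd (vsub z1 z2) (vsub (PN t1 w1) (PN t1 w2))) (vsub (PN t1 w2) (PN t2 w2))).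
  { rewrite E1, E2. vec_eq. }
  assert (Hm : norm (vsub (L w1) (L w2)) <= norm (vsub z1 z2) + n * (q * norm (vsub (L w1) (L w2))) + norm (vsub (PN t1 w2) (PN t2 w2))).
  { rewrite E at 1. eapply Rle_trans. apply norm_add_le3.
    pose proof (Lip t1 w1 w2 (proj2 H1) (proj2 H2)). fold (PN t1 w1) (PN t1 w2) in H.
    assert (n * norm (vsub w1 w2) <= n * (q * norm (vsub (L w1) (L w2)))) by (apply Rmult_le_compat_l; lra).
    lra. }
  apply (Rmult_le_reg_r (1 - n * q)). lra. unfold Rdiv. rewrite Rmult_assoc, Rinv_l, Rmult_1_r by lra. lra.
Qed.

Lemma PN_cont w t0 : HX D phi w -> forall e, 0 < e -> exists d, 0 < d /\ forall t, Rabs (t - t0) < d ->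
  norm (vsub (PN t w) (PN t0 w)) < e.
Proof.
  intros Hw e He.
  set (b := vadd w (vscal t0 phi)).
  assert (Db : D b) by (apply sub_add; [apply (SA_sub D L SA)|apply Hw|apply sub_scal; [apply (SA_sub D L SA)|exact HDphi]]).
  destruct (FC b Db (e / 2) ltac:(lra)) as [d1 [Hd1 HF]].
  set (d := Rmin (d1 / (Rabs lam + 2)) (e / (2 * (Rabs lam + 1)))).
  assert (Hlam : 0 <= Rabs lam) by apply Rabs_pos.
  assert (Hd : 0 < d) by (unfold d; apply Rmin_pos; apply Rdiv_lt_0_compat; lra).
  exists d. split; [exact Hd|]. intros t Ht.
  set (a := vadd w (vscal t phi)).
  assert (Da : D a) by (apply sub_add; [apply (SA_sub D L SA)|apply Hw|apply sub_scal; [apply (SA_sub D L SA)|exact HDphi]]).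
  assert (hnphi : norm phi = 1) by (unfold norm; rewrite Hphi; apply sqrt_1).
  assert (Eab : vsub b a = vscal (t0 - t) phi) by (unfold a, b; vec_eq).
  assert (ELab : vsub (L b) (L a) = vscal ((t0 - t) * lam) phi).
  { unfold a, b. rewrite !Lwt by apply Hw. vec_eq. }
  assert (Ht' : Rabs (t0 - t) < d) by (rewrite Rabs_minus_sym; exact Ht).
  assert (Hd1' : d <= d1 / (Rabs lam + 2)) by apply Rmin_l.
  assert (Hd2' : d <= e / (2 * (Rabs lam + 1))) by apply Rmin_r.
  assert (Hgd : graph_dist L b a < d1).
  { eapply Rle_lt_trans. apply graph_dist_le. rewrite Eab, ELab, !norm_scal, hnphi, Rabs_mult.
    assert (Rabs (t0 - t) * (Rabs lam + 2) < d1).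
    { apply Rlt_le_trans with (d * (Rabs lam + 2)). apply Rmult_lt_compat_r; lra.
      apply (Rmult_le_compat_r (Rabs lam + 2)) in Hd1'; [|lra]. unfold Rdiv in Hd1'.
      rewrite Rmult_assoc, Rinv_l, Rmult_1_r in Hd1' by lra. exact Hd1'. }
    pose proof (Rabs_pos (t0 - t)). nra. }
  specialize (HF a Da Hgd). unfold distY in HF.
  assert (EN : forall x, N x = vsub (L x) (Fmap L N x)) by (intro x; unfold Fmap; vec_eq).
  unfold PN. fold a b. rewrite <- (Pr_sub phi). eapply Rle_lt_trans. apply (Pr_norm phi Hphi).
  rewrite (EN a), (EN b).
  replace (vsub (vsub (L a) (Fmap L N a)) (vsub (L b) (Fmap L N b))) with
     (vadd (vopp (vsub (L b) (L a))) (vsub (Fmap L N b) (Fmap L N a))) by vec_eq.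
  eapply Rle_lt_trans. apply norm_triangle. rewrite norm_opp, ELab, norm_scal, hnphi, Rabs_mult.
  rewrite norm_sub_sym.
  assert (Rabs (t0 - t) * Rabs lam < e / 2).
  { apply Rle_lt_trans with (Rabs (t0 - t) * (Rabs lam + 1)). pose proof (Rabs_pos (t0 - t)). nra.
    apply Rlt_le_trans with (d * (Rabs lam + 1)). apply Rmult_lt_compat_r; lra.
    apply (Rmult_le_compat_r (Rabs lam + 1)) in Hd2'; [|lra].
    replace (e / (2 * (Rabs lam + 1)) * (Rabs lam + 1)) with (e/2) in Hd2' by (field; lra). exact Hd2'. }
  lra.
Qed.

End Fib.

Lemma RBW (a : nat -> R) (B : R) : (forall i, Rabs (a i) <= B) ->
  exists tau, forall e, 0 < e -> forall N, exists i, (N <= i)%nat /\ Rabs (a i - tau) < e.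
Proof.
  intro H. destruct (Rtopology.Bolzano_Weierstrass a (fun c => -B <= c <= B) (Rtopology.compact_P3 (-B) B)) as [l Hl].
  { intro i. specialize (H i). pose proof (Rle_abs (a i)). pose proof (Rle_abs (- a i)). rewrite Rabs_Ropp in H1. lra. }
  exists l. intros e He N. destruct (Hl (Rtopology.disc l (mkposreal e He)) N) as [p [Hp1 Hp2]].
  { exists (mkposreal e He). intros x Hx. exact Hx. }
  exists p. split; [exact Hp1|]. exact Hp2.
Qed.

Lemma Rdiv_le_0_compat_local (a b : R) : 0 <= a -> 0 < b -> 0 <= a / b.
Proof. intros. unfold Rdiv. apply Rmult_le_pos. lra. apply Rlt_le, Rinv_0_lt_compat; lra. Qed.

Section Rev.
Context {Y : RHilbert}.
Implicit Types (x y : Y).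
Context (D : Y -> Prop) (L N : Y -> Y) (lam : R) (phi : Y) (n q : R) (G : Y -> Y).
Hypothesis SA : self_adjoint D L.
Hypothesis EIG : simple_isolated_eigenvalue D L lam phi.
Hypothesis FC : F_continuous D L N.
Hypothesis Hn : 0 <= n.
Hypothesis Lip : forall t w1 w2, HY phi w1 -> HY phi w2 ->
       norm (vsub (Pr phi (N (vadd w1 (vscal t phi)))) (Pr phi (N (vadd w2 (vscal t phi))))) <= n * norm (vsub w1 w2).
Hypothesis Hq : 0 <= q.
Hypothesis Hnq : n * q < 1.
Hypothesis HG : forall y, HY phi y -> HX D phi (G y) /\ L (G y) = y.
Hypothesis HGb : forall y, HY phi y -> norm (G y) <= q * norm y.
Hypothesis GLin : linear_on (HY phi) G.
Hypothesis GL : forall x, HX D phi x -> G (L x) = x.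
Hypothesis HV : hyp_V D L N lam phi.

Let Hphi := phi1 D L lam phi EIG.
Let HDphi := Dphi D L lam phi EIG.
Let SD := SA_sub D L SA.

Lemma REV_seq K : compact_in (fun _ => True) distY K -> seqcomp (graph_dist L) (fun u => D u /\ K (Fmap L N u)).
Proof.
  intros HK u Hu.
  set (y := fun k => Fmap L N (u k)).
  destruct (C1 _ _ _ distY_pm HK y (fun k => proj2 (Hu k))) as [p [Kp Hcl]].
  destruct (extract _ _ _ Hcl) as [sg [Hsg Hconv]].
  set (U := fun j => u (sg j)).
  set (t := fun j => inner (U j) phi).
  set (w := fun j => Pr phi (U j)).
  set (z := fun j => Pr phi (Fmap L N (U j))).
  assert (DU : forall j, D (U j)) by (intro j; apply Hu).
  assert (Hdec : forall j, U j = vadd (w j) (vscal (t j) phi)) by (intro j; apply Pr_decomp).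
  assert (HXw : forall j, HX D phi (w j)).
  { intro j. split. unfold w, Pr. apply sub_sub. exact SD. apply DU. apply sub_scal. exact SD. exact HDphi.
    apply (Pr_HY phi Hphi). }
  assert (Heq : forall j, L (w j) = vadd (z j) (PN N phi (t j) (w j))).
  { intro j. pose proof (PrF D L N lam phi SA EIG (w j) (t j) (HXw j)) as H. rewrite <- Hdec in H.
    fold (z j) in H. rewrite H. vec_eq. }
  assert (Hz : forall j, HY phi (z j)) by (intro j; apply (Pr_HY phi Hphi)).
  assert (Hisu : forall j, is_u D L N phi (z j) (t j) (U j)).
  { intro j. exists (w j). split; [apply HXw|]. split. rewrite <- Hdec. reflexivity. apply Hdec. }
  set (z0 := Pr phi p).
  assert (Hz0 : HY phi z0) by apply (Pr_HY phi Hphi).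
  assert (Hzc : forall j, norm (vsub (z j) z0) <= norm (vsub p (Fmap L N (U j)))).
  { intro j. unfold z, z0. rewrite <- (Pr_sub phi). eapply Rle_trans. apply (Pr_norm phi Hphi). right; apply norm_sub_sym. }
  set (sp := inner p phi).
  assert (Hsc : forall j, Rabs (inner (Fmap L N (U j)) phi - sp) <= norm (vsub p (Fmap L N (U j)))).
  { intro j. unfold sp. replace (inner (Fmap L N (U j)) phi - inner p phi) with (inner (vsub (Fmap L N (U j)) p) phi)
      by (rewrite inner_sub_l; ring). rewrite norm_sub_sym. apply (inner_phi_le phi Hphi). }
  assert (Hs : forall j, inner (Fmap L N (U j)) phi = lam * t j - inner (N (U j)) phi).
  { intro j. unfold Fmap. rewrite inner_sub_l. rewrite (SA_sym D L SA) by (auto; apply DU).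
    rewrite (Lphi D L lam phi EIG), inner_scal_r. reflexivity. }
  destruct (HV z0 Hz0) as [r [eps [T [cp [cm [Hr [Heps [HT HVz]]]]]]]].
  destruct (Hconv (Rmin r 1) ltac:(apply Rmin_pos; lra)) as [J HJ].
  set (B := T + (Rabs sp + 1 + Rabs cp + Rabs cm) / eps).
  assert (Hbound : forall j, (J <= j)%nat -> Rabs (t j) <= B).
  { intros j Hj. specialize (HJ j Hj). change (distY p (Fmap L N (U j)) < Rmin r 1) in HJ. unfold distY in HJ.
    pose proof (Rmin_l r 1). pose proof (Rmin_r r 1).
    destruct (HVz (z j) (Hz j) ltac:(unfold distY; pose proof (Hzc j); lra)) as [Vp Vm].
    pose proof (Hsc j) as Hsj. rewrite Hs in Hsj.
    assert (Hsj2 : Rabs (lam * t j - inner (N (U j)) phi) <= Rabs sp + 1).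
    { pose proof (Rabs_triang (lam * t j - inner (N (U j)) phi - sp) sp).
      replace (lam * t j - inner (N (U j)) phi - sp + sp) with (lam * t j - inner (N (U j)) phi) in H1 by ring. lra. }
    pose proof (Rle_abs (lam * t j - inner (N (U j)) phi)). pose proof (Rle_abs (- (lam * t j - inner (N (U j)) phi))).
    rewrite Rabs_Ropp in H2.
    pose proof (Rle_abs cp). pose proof (Rle_abs (-cp)). pose proof (Rle_abs cm). pose proof (Rle_abs (-cm)).
    rewrite Rabs_Ropp in H4, H6.
    assert (0 <= (Rabs sp + 1 + Rabs cp + Rabs cm) / eps).
    { apply Rdiv_le_0_compat_local; [pose proof (Rabs_pos sp); pose proof (Rabs_pos cp); pose proof (Rabs_pos cm); lra|lra]. }
    assert (HBe : eps * ((Rabs sp + 1 + Rabs cp + Rabs cm) / eps) = Rabs sp + 1 + Rabs cp + Rabs cm) by (field; lra).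
    apply Rabs_le. destruct (Rlt_dec T (t j)) as [Hgt|Hngt].
    - pose proof (Vp (t j) (U j) Hgt (Hisu j)). split. unfold B. lra.
      assert (eps * t j < Rabs sp + 1 + Rabs cp) by nra.
      assert (eps * t j <= eps * B) by (unfold B; nra). apply (Rmult_le_reg_l eps); lra.
    - destruct (Rlt_dec (t j) (- T)) as [Hlt|Hnlt].
      + pose proof (Vm (t j) (U j) Hlt (Hisu j)). split; [|unfold B; lra].
        assert (- (eps * t j) < Rabs sp + 1 + Rabs cm) by nra.
        assert (eps * (- B) <= eps * t j) by (unfold B; nra). apply (Rmult_le_reg_l eps); lra.
      + unfold B. split; lra. }
  destruct (RBW (fun i => t (J + i)%nat) B (fun i => Hbound (J + i)%nat ltac:(lia))) as [tau Htau].
  assert (Hclt : cluster distY (vscal tau phi) (fun i => vscal (t (J + i)%nat) phi)).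
  { intros e He M. destruct (Htau e He M) as [i [Hi1 Hi2]]. exists i. split; [exact Hi1|].
    unfold distY. replace (vsub (vscal tau phi) (vscal (t (J + i)%nat) phi)) with (vscal (tau - t (J + i)%nat) phi) by vec_eq.
    rewrite norm_scal. assert (norm phi = 1) by (unfold norm; rewrite Hphi; apply sqrt_1). rewrite H, Rmult_1_r.
    rewrite Rabs_minus_sym. exact Hi2. }
  destruct (extract _ _ _ Hclt) as [rh [Hrh Hrhc]].
  set (jj := fun i => (J + rh i)%nat).
  assert (Hjj : forall i, (i <= jj i)%nat) by (intro i; unfold jj; specialize (Hrh i); lia).
  assert (Htc : forall e, 0 < e -> exists M, forall i, (M <= i)%nat -> Rabs (t (jj i) - tau) < e).
  { intros e He. destruct (Hrhc e He) as [M HM]. exists M. intros i Hi. specialize (HM i Hi). unfold distY in HM.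
    replace (vsub (vscal tau phi) (vscal (t (J + rh i)%nat) phi)) with (vscal (tau - t (J + rh i)%nat) phi) in HM by vec_eq.
    rewrite norm_scal in HM. assert (norm phi = 1) by (unfold norm; rewrite Hphi; apply sqrt_1). rewrite H, Rmult_1_r in HM.
    rewrite Rabs_minus_sym. exact HM. }
  destruct (exist_w D L N lam phi n q G EIG Hn Lip Hq Hnq HG HGb GLin z0 tau Hz0) as [ws [HXws Heqs]].
  set (us := vadd ws (vscal tau phi)).
  assert (Dus : D us) by (apply sub_add; [exact SD|apply HXws|apply sub_scal; [exact SD|exact HDphi]]).
  assert (Conv : conv (graph_dist L) us (fun i => U (jj i))).
  { intros e He.
    set (c1 := 2 * (1 + q) / (1 - n * q) + (1 + Rabs lam) + 1).
    assert (Hc1 : 0 < c1) by (unfold c1; pose proof (Rabs_pos lam); assert (0 <= 2 * (1 + q) / (1 - n*q)) by (apply Rdiv_le_0_compat_local; lra); lra).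
    set (eta := e / c1).
    assert (Heta : 0 < eta) by (unfold eta; apply Rdiv_lt_0_compat; lra).
    destruct (PN_cont D L N lam phi SA EIG FC ws tau HXws eta Heta) as [dl [Hdl HPN]].
    destruct (Htc (Rmin eta dl) ltac:(apply Rmin_pos; lra)) as [M1 HM1].
    destruct (Hconv eta Heta) as [M2 HM2].
    exists (max M1 M2). intros i Hi.
    specialize (HM1 i ltac:(lia)). specialize (HM2 (jj i) ltac:(specialize (Hjj i); lia)).
    change (distY p (Fmap L N (U (jj i))) < eta) in HM2. unfold distY in HM2.
    pose proof (Rmin_l eta dl). pose proof (Rmin_r eta dl).
    set (j := jj i) in *.
    pose proof (stab D L N lam phi n q G SA EIG Hn Lip Hnq HGb GL (w j) ws (z j) z0 (t j) tau (HXw j) HXws (Hz j) Hz0 (Heq j) Heqs) as [S1 S2].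
    set (Mj := norm (vsub (L (w j)) (L ws))) in *.
    assert (HPNj : norm (vsub (PN N phi (t j) ws) (PN N phi tau ws)) < eta) by (apply HPN; lra).
    assert (HMj : Mj <= 2 * eta / (1 - n * q)).
    { eapply Rle_trans. exact S1. unfold Rdiv. apply Rmult_le_compat_r. apply Rlt_le, Rinv_0_lt_compat; lra.
      pose proof (Hzc j). lra. }
    assert (Hgd : graph_dist L us (U j) <= (1 + q) * Mj + (1 + Rabs lam) * Rabs (t j - tau)).
    { eapply Rle_trans. apply graph_dist_le. rewrite Hdec. unfold us.
      replace (vsub (vadd ws (vscal tau phi)) (vadd (w j) (vscal (t j) phi))) with (vadd (vsub ws (w j)) (vscal (tau - t j) phi)) by vec_eq.
      rewrite (Lwt D L lam phi SA EIG) by apply HXws. rewrite (Lwt D L lam phi SA EIG) by apply HXw.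
      replace (vsub (vadd (L ws) (vscal (tau * lam) phi)) (vadd (L (w j)) (vscal (t j * lam) phi))) with
        (vadd (vsub (L ws) (L (w j))) (vscal ((tau - t j) * lam) phi)) by vec_eq.
      assert (Hnp : norm phi = 1) by (unfold norm; rewrite Hphi; apply sqrt_1).
      pose proof (norm_triangle (vsub ws (w j)) (vscal (tau - t j) phi)) as T1.
      pose proof (norm_triangle (vsub (L ws) (L (w j))) (vscal ((tau - t j) * lam) phi)) as T2.
      rewrite norm_scal, Hnp in T1. rewrite norm_scal, Hnp in T2.
      rewrite (norm_sub_sym ws) in T1. rewrite (norm_sub_sym (L ws)) in T2. fold Mj in T2.
      rewrite Rabs_mult in T2. rewrite (Rabs_minus_sym tau) in T1, T2.
      pose proof (Rabs_pos (t j - tau)). pose proof (Rabs_pos lam).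
      assert (q * Mj + Mj = (1 + q) * Mj) by ring.
      assert (Rabs (t j - tau) * Rabs lam * 1 = Rabs lam * Rabs (t j - tau)) by ring.
      lra. }
    assert (HMj2 : (1 + q) * Mj <= (1 + q) * (2 * eta / (1 - n * q))) by (apply Rmult_le_compat_l; lra).
    assert (Ht2 : (1 + Rabs lam) * Rabs (t j - tau) < (1 + Rabs lam) * eta).
    { apply Rmult_lt_compat_l. pose proof (Rabs_pos lam); lra. lra. }
    assert (Hfin : (1 + q) * (2 * eta / (1 - n * q)) + (1 + Rabs lam) * eta < e).
    { assert (E : e = c1 * eta) by (unfold eta; field; lra). rewrite E. unfold c1.
      replace ((1 + q) * (2 * eta / (1 - n * q))) with (2 * (1 + q) / (1 - n * q) * eta) by (field; lra). nra. }
    change (graph_dist L us (U j) < e). lra. }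
  exists us. split. split. exact Dus.
  -
    assert (E : Fmap L N us = p).
    { apply veq_of_inner. rewrite <- norm_sq.
      assert (norm (vsub (Fmap L N us) p) = 0).
      { apply small_zero. apply norm_nonneg. intros e He.
        destruct (FC us Dus (e/2) ltac:(lra)) as [dl [Hdl HFd]].
        destruct (Conv dl Hdl) as [M1 HM1]. destruct (Hconv (e/2) ltac:(lra)) as [M2 HM2].
        set (i := max M1 M2).
        specialize (HM1 i ltac:(unfold i; lia)). specialize (HM2 (jj i) ltac:(specialize (Hjj i); unfold i in *; lia)).
        specialize (HFd (U (jj i)) (DU _) HM1). unfold distY in HFd, HM2.
        eapply Rle_lt_trans. apply (norm_sub_tri _ (Fmap L N (U (jj i)))). rewrite norm_sub_sym.
        change (norm (vsub p (Fmap L N (U (jj i)))) < e/2) in HM2. rewrite (norm_sub_sym _ p). lra. }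
      rewrite H; ring. }
    rewrite E. exact Kp.
  - apply (conv_cluster _ _ _ (fun i => sg (jj i))). intro i. specialize (Hsg (jj i)). specialize (Hjj i). lia.
    exact Conv.
Qed.

End Rev.

Theorem mainTheorem9 (Y : RHilbert) (D : Y -> Prop) (L N : Y -> Y)
    (lam : R) (phi : Y) :
  self_adjoint D L ->
  simple_isolated_eigenvalue D L lam phi ->
  F_continuous D L N ->
  hyp_H D L N lam phi ->
  hyp_V D L N lam phi ->
  (F_proper D L N <-> forall z, HY phi z -> fiber_proper D L N phi z).
Proof.
  intros SA EIG FC HH HV.
  destruct HH as [n [Hn [Lip Hspec]]].
  destruct (GINV D L lam phi SA EIG n Hn Hspec) as [G [q [Hq [Hnq [HG [HGb [GLin GL]]]]]]].
  pose proof (phi1 D L lam phi EIG) as Hphi.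
  pose proof (Dphi D L lam phi EIG) as HDphi.
  pose proof (SA_sub D L SA) as SD.
  assert (fibD : forall z u, fiber D L N phi z u -> D u).
  { intros z u [t [w [[Dw _] [_ ->]]]]. apply sub_add; auto. apply sub_scal; auto. }
  split.
  - intros FP z Hz K HK.
    pose proof (C1 _ _ _ distY_pm HK) as sK.
    assert (HK' : compact_in (fun _ => True) distY K) by (apply C2; [exact distY_pm|auto|exact sK]).
    pose proof (FP K HK') as HC.
    pose proof (C1 _ _ _ (graph_dist_pm L) HC) as sC.
    apply C2. apply graph_dist_pm. intros x [Hx _]; exact Hx.
    intros x Hx. destruct (sC x (fun k => conj (fibD z _ (proj1 (Hx k))) (proj2 (Hx k)))) as [p [[Dp Kp] Hcl]].
    exists p. split; [|exact Hcl]. split; [|exact Kp].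
    destruct (proj1 HK _ Kp) as [s Hs].
    exists (inner p phi). exists (Pr phi p). split. split.
    + unfold Pr. apply sub_sub; auto. apply sub_scal; auto.
    + apply (Pr_HY phi Hphi).
    + split; [|apply Pr_decomp].
      rewrite <- Pr_decomp. rewrite Hs. rewrite (Pr_add phi), (Pr_scal phi), (Pr_phi phi Hphi), (Pr_id phi z Hz). vec_eq.
  - intros _ K HK. apply C2. apply graph_dist_pm. intros x [Hx _]; exact Hx.
    apply (REV_seq D L N lam phi n q G SA EIG FC Hn Lip Hq Hnq HG HGb GLin GL HV K HK).
Qed.
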